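(* Let $\Lambda\in\mathbb{N}$ and let $\bm{\omega}=\sum_{l=0}^{\Lambda}\sum_{h=-l}^{l}\omega_l^h\bm{\psi}_l^h\in\mathcal{H}_\Lambda$ satisfy $$\sum_{h=-l}^{l}|\omega_l^h|^2=\frac{2l+1}{(\Lambda+1)^2},\qquad l=0,1,\dots,\Lambda.$$ Then on $\mathcal{H}_\Lambda$ the resolution of the identity $$I=\frac{(\Lambda+1)^2}{8\pi^2}\int_{SO(3)}d\mu(g)\,P_g,\qquad P_g:=\bm{\omega}_g\langle\bm{\omega}_g,\cdot\rangle,\qquad \bm{\omega}_g:=\pi_\Lambda(g)\bm{\omega}$$ holds. Moreover, if $\omega_l^h=\omega_l^{-h}$ for all $l,h$, the set $\{\bm{\omega}_g\}_{g\in SO(3)}$ is mapped into itself by the unitary operator $U$ defined by $U\bm{\psi}_l^h=\bm{\psi}_l^{-h}$.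
   Context: $\mathcal{H}_\Lambda$ is a Hilbert space with orthonormal basis $\{\bm{\psi}_l^m\}_{l=0,\dots,\Lambda;\ m=-l,\dots,l}$. Operators: $L_3\bm{\psi}_l^m=m\bm{\psi}_l^m$, $L_\pm\bm{\psi}_l^m=\sqrt{(l\mp m)(l\pm m+1)}\,\bm{\psi}_l^{m\pm1}$, $L_1=(L_++L_-)/2$, $L_2=(L_+-L_-)/(2i)$. $\pi_\Lambda$ is the unitary representation of $SO(3)$ on $\mathcal{H}_\Lambda$ generated by the $L_i$: with Euler angles $(\varphi,\theta,\psi)\in[0,2\pi)\times[0,\pi]\times[0,2\pi)$, $\pi_\Lambda(g)=e^{i\varphi L_3}e^{i\theta L_2}e^{i\psi L_3}$ and $\int_{SO(3)}d\mu(g)=\int_0^{2\pi}d\varphi\int_0^\pi d\theta\sin\theta\int_0^{2\pi}d\psi$. The inner product is antilinear in the first argument. *)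

(* Defs.v *)
From Stdlib Require Export Reals List ZArith Bool.
From Coquelicot Require Export Coquelicot.

Open Scope R_scope.
Open Scope bool_scope.
Open Scope R_scope.

(* Basis index (l, m) of psi_l^m, 0 <= l <= Lambda, -l <= m <= l. *)
Definition ix : Type := (nat * Z)%type.

Definition valid (Lam : nat) (a : ix) : Prop :=
  (fst a <= Lam)%nat /\ (- Z.of_nat (fst a) <= snd a <= Z.of_nat (fst a))%Z.

Definition mrange (l : nat) : list Z :=
  map (fun k => (Z.of_nat k - Z.of_nat l)%Z) (seq 0 (2 * l + 1)).

Definition idx (Lam : nat) : list ix :=
  flat_map (fun l => map (fun m => (l, m)) (mrange l)) (seq 0 (S Lam)).

(* vectors of H_Lambda = coordinate functions on the basis (only indices of idx
   Lam are ever used); operators = their matrices A a b = <psi_a, A psi_b>. *)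
Definition vec : Type := ix -> C.
Definition mat : Type := ix -> ix -> C.

Fixpoint sumC {T : Type} (s : list T) (f : T -> C) : C :=
  match s with nil => 0%C | x :: s' => (f x + sumC s' f)%C end.

Fixpoint sumR {T : Type} (s : list T) (f : T -> R) : R :=
  match s with nil => 0 | x :: s' => f x + sumR s' f end.

Definition ix_eqb (a b : ix) : bool := Nat.eqb (fst a) (fst b) && Z.eqb (snd a) (snd b).

Definition idm : mat := fun a b => if ix_eqb a b then 1%C else 0%C.
Definition madd (A B : mat) : mat := fun a b => (A a b + B a b)%C.
Definition mscale (c : C) (A : mat) : mat := fun a b => (c * A a b)%C.
Definition mmul (Lam : nat) (A B : mat) : mat :=
  fun a b => sumC (idx Lam) (fun c => (A a c * B c b)%C).
Definition mvec (Lam : nat) (A : mat) (v : vec) : vec :=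
  fun a => sumC (idx Lam) (fun c => (A a c * v c)%C).

Fixpoint mpow (Lam : nat) (A : mat) (n : nat) : mat :=
  match n with O => idm | S n' => mmul Lam A (mpow Lam A n') end.

Fixpoint expm_partial (Lam : nat) (A : mat) (n : nat) : mat :=
  match n with
  | O => idm
  | S n' => madd (expm_partial Lam A n')
                 (mscale (RtoC (/ INR (fact (S n')))) (mpow Lam A (S n')))
  end.

Definition expm (Lam : nat) (A : mat) : mat :=
  fun a b => (real (Lim_seq (fun n => Re (expm_partial Lam A n a b))),
              real (Lim_seq (fun n => Im (expm_partial Lam A n a b)))).

Definition L3 : mat := fun a b => if ix_eqb a b then RtoC (IZR (snd b)) else 0%C.

Definition Lp : mat := fun a b =>
  let l := Z.of_nat (fst b) in let m := snd b in
  if Nat.eqb (fst a) (fst b) && Z.eqb (snd a) (m + 1)%Z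
  then RtoC (sqrt (IZR ((l - m) * (l + m + 1))))
  else 0%C.

Definition Lm : mat := fun a b =>
  let l := Z.of_nat (fst b) in let m := snd b in
  if Nat.eqb (fst a) (fst b) && Z.eqb (snd a) (m - 1)%Z
  then RtoC (sqrt (IZR ((l + m) * (l - m + 1))))
  else 0%C.

Definition L1 : mat := fun a b => ((Lp a b + Lm a b) / 2)%C.
Definition L2 : mat := fun a b => ((Lp a b - Lm a b) / (2 * Ci))%C.

(* pi_Lambda(g) = e^{i phi L3} e^{i theta L2} e^{i psi L3}, Euler angles *)
Definition piL (Lam : nat) (phi theta psi : R) : mat :=
  mmul Lam (expm Lam (mscale (Ci * RtoC phi) L3))
    (mmul Lam (expm Lam (mscale (Ci * RtoC theta) L2))
              (expm Lam (mscale (Ci * RtoC psi) L3))).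

Definition euler_range (phi theta psi : R) : Prop :=
  0 <= phi < 2 * PI /\ 0 <= theta <= PI /\ 0 <= psi < 2 * PI.

Definition omega_g (Lam : nat) (w : vec) (phi theta psi : R) : vec :=
  mvec Lam (piL Lam phi theta psi) w.

(* matrix of P_g = omega_g <omega_g, .> : entry (a,b) = omega_g(a) * conj(omega_g(b)) *)
Definition Pg (Lam : nat) (w : vec) (phi theta psi : R) : mat :=
  fun a b => (omega_g Lam w phi theta psi a * Cconj (omega_g Lam w phi theta psi b))%C.

(* int_{SO(3)} dmu(g) F(g) with dmu = dphi sin(theta) dtheta dpsi *)
Definition so3_int (F : R -> R -> R -> C) : C :=
  @RInt C_R_CompleteNormedModule (fun phi =>
    @RInt C_R_CompleteNormedModule (fun theta =>
      (RtoC (sin theta) *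
       @RInt C_R_CompleteNormedModule (fun psi => F phi theta psi) 0 (2 * PI))%C)
      0 PI)
    0 (2 * PI).

Definition Uop (v : vec) : vec := fun a => v (fst a, (- snd a)%Z).

(* Main.v *)
Require Import Defs.
From Stdlib Require Import Reals List ZArith Lia Lra Permutation FunctionalExtensionality.
From Coquelicot Require Import Coquelicot.
Open Scope R_scope.

Lemma ix_eq_dec : forall a b : ix, {a = b} + {a <> b}.
Proof. intros [a1 a2] [b1 b2]. destruct (Nat.eq_dec a1 b1); destruct (Z.eq_dec a2 b2); subst;
  [left; reflexivity| right; congruence | right; congruence | right; congruence]. Qed.

Lemma ix_eqb_spec : forall a b, ix_eqb a b = true <-> a = b.
Proof. intros [a1 a2] [b1 b2]; unfold ix_eqb; simpl. rewrite andb_true_iff, Nat.eqb_eq, Z.eqb_eq.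
  split; [intros [-> ->]; reflexivity | intros H; inversion H; auto]. Qed.

Lemma ix_eqb_refl : forall a, ix_eqb a a = true.
Proof. intros; apply ix_eqb_spec; reflexivity. Qed.

Lemma ix_eqb_neq : forall a b, a <> b -> ix_eqb a b = false.
Proof. intros a b H. destruct (ix_eqb a b) eqn:E; auto. apply ix_eqb_spec in E. tauto. Qed.

Section SumR.
Context {T : Type}.
Lemma sumR_ext (s : list T) f g : (forall x, In x s -> f x = g x) -> sumR s f = sumR s g.
Proof. induction s; simpl; intros H; auto. rewrite H, IHs; auto. Qed.
Lemma sumR_plus (s : list T) f g : sumR s (fun x => f x + g x) = sumR s f + sumR s g.
Proof. induction s; simpl; [ring| rewrite IHs; ring]. Qed.
Lemma sumR_minus (s : list T) f g : sumR s (fun x => f x - g x) = sumR s f - sumR s g.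
Proof. induction s; simpl; [ring| rewrite IHs; ring]. Qed.
Lemma sumR_scal (s : list T) k f : sumR s (fun x => k * f x) = k * sumR s f.
Proof. induction s; simpl; [ring| rewrite IHs; ring]. Qed.
Lemma sumR_0 (s : list T) f : (forall x, In x s -> f x = 0) -> sumR s f = 0.
Proof. induction s; simpl; intros H; auto. rewrite H, IHs; auto; ring. Qed.
Lemma sumR_app (s t : list T) f : sumR (s ++ t) f = sumR s f + sumR t f.
Proof. induction s; simpl; [ring| rewrite IHs; ring]. Qed.
Lemma sumR_perm (s t : list T) f : Permutation s t -> sumR s f = sumR t f.
Proof. induction 1; simpl; auto; try ring. rewrite IHPermutation; auto. congruence. Qed.
Lemma sumR_notin (s : list T) f x0 : (forall x, In x s -> x <> x0 -> f x = 0) -> ~ In x0 s -> sumR s f = 0.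
Proof. intros H Hn. apply sumR_0. intros x Hx. apply H; auto. intro; subst; tauto. Qed.
Lemma sumR_single (s : list T) f x0 : NoDup s -> In x0 s -> (forall x, In x s -> x <> x0 -> f x = 0) -> sumR s f = f x0.
Proof. induction 1; simpl; intros Hin Hf; [tauto|]. destruct Hin as [<-|Hin].
  - rewrite (sumR_notin l f x); auto. ring.
  - rewrite IHNoDup; auto. rewrite Hf; auto; [ring|]. intro; subst; tauto. Qed.
Lemma sumR_nonneg (s : list T) f : (forall x, In x s -> 0 <= f x) -> 0 <= sumR s f.
Proof. induction s; simpl; intros H; [lra|]. pose proof (H a (or_introl eq_refl)). pose proof (IHs (fun x Hx => H x (or_intror Hx))). lra. Qed.
Lemma sumR_le (s : list T) f g : (forall x, In x s -> f x <= g x) -> sumR s f <= sumR s g.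
Proof. induction s; simpl; intros H; [lra|]. pose proof (H a (or_introl eq_refl)). pose proof (IHs (fun x Hx => H x (or_intror Hx))). lra. Qed.
Lemma sumR_abs (s : list T) f : Rabs (sumR s f) <= sumR s (fun x => Rabs (f x)).
Proof. induction s; simpl. rewrite Rabs_R0; lra. eapply Rle_trans; [apply Rabs_triang|lra]. Qed.
Lemma sumR_ge_term (s : list T) f x0 : (forall x, In x s -> 0 <= f x) -> In x0 s -> f x0 <= sumR s f.
Proof. induction s; simpl; intros H Hin; [tauto|]. destruct Hin as [<-|Hin].
  - pose proof (sumR_nonneg s f (fun x Hx => H x (or_intror Hx))). lra.
  - pose proof (H a (or_introl eq_refl)). pose proof (IHs (fun x Hx => H x (or_intror Hx)) Hin). lra. Qed.
Lemma sumR_sq0 (s : list T) f : sumR s (fun x => f x ^ 2) = 0 -> forall x, In x s -> f x = 0.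
Proof. intros H x Hx. assert (f x ^ 2 <= 0).
  { rewrite <- H. apply (sumR_ge_term s (fun x => f x ^ 2)); auto. intros; apply pow2_ge_0. }
  pose proof (pow2_ge_0 (f x)). nra. Qed.
End SumR.

Lemma sumR_flat_map {T U : Type} (g : T -> list U) (s : list T) f :
  sumR (flat_map g s) f = sumR s (fun x => sumR (g x) f).
Proof. induction s; simpl; auto. rewrite sumR_app, IHs; auto. Qed.
Lemma sumR_map {T U : Type} (g : T -> U) (s : list T) f : sumR (map g s) f = sumR s (fun x => f (g x)).
Proof. induction s; simpl; auto. rewrite IHs; auto. Qed.
Lemma sumR_swap {T U : Type} (s : list T) (t : list U) f :
  sumR s (fun x => sumR t (fun y => f x y)) = sumR t (fun y => sumR s (fun x => f x y)).
Proof. induction s; simpl. symmetry; apply sumR_0; auto. rewrite IHs, <- sumR_plus. reflexivity. Qed.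

Section SumC.
Context {T : Type}.
Open Scope C_scope.
Lemma sumC_ext (s : list T) (f g : T -> C) : (forall x, In x s -> f x = g x) -> sumC s f = sumC s g.
Proof. induction s; simpl; intros H; auto. rewrite H, IHs; auto. Qed.
Lemma Re_sumC (s : list T) (f : T -> C) : Re (sumC s f) = sumR s (fun x => Re (f x)).
Proof. induction s; simpl; auto. rewrite <- IHs; reflexivity. Qed.
Lemma Im_sumC (s : list T) (f : T -> C) : Im (sumC s f) = sumR s (fun x => Im (f x)).
Proof. induction s; simpl; auto. rewrite <- IHs; reflexivity. Qed.
Lemma sumC_plus (s : list T) (f g : T -> C) : sumC s (fun x => f x + g x) = sumC s f + sumC s g.
Proof. induction s; simpl; [ring| rewrite IHs; ring]. Qed.
Lemma sumC_scal (s : list T) k (f : T -> C) : sumC s (fun x => k * f x) = k * sumC s f.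
Proof. induction s; simpl; [ring| rewrite IHs; ring]. Qed.
Lemma sumC_0 (s : list T) (f : T -> C) : (forall x, In x s -> f x = 0) -> sumC s f = 0.
Proof. induction s; simpl; intros H; auto. rewrite H, IHs; auto; ring. Qed.
Lemma sumC_notin (s : list T) (f : T -> C) x0 : (forall x, In x s -> x <> x0 -> f x = 0) -> ~ In x0 s -> sumC s f = 0.
Proof. intros H Hn. apply sumC_0. intros x Hx. apply H; auto. intro; subst; tauto. Qed.
Lemma sumC_single (s : list T) (f : T -> C) x0 : NoDup s -> In x0 s -> (forall x, In x s -> x <> x0 -> f x = 0) -> sumC s f = f x0.
Proof. induction 1; simpl; intros Hin Hf; [tauto|]. destruct Hin as [<-|Hin].
  - rewrite (sumC_notin l f x); auto. ring.
  - rewrite IHNoDup; auto. rewrite Hf; auto; [ring|]. intro; subst; tauto. Qed.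
Lemma sumC_perm (s t : list T) (f : T -> C) : Permutation s t -> sumC s f = sumC t f.
Proof. induction 1; simpl; auto; try ring. rewrite IHPermutation; auto. congruence. Qed.
Lemma Cmod_sumC (s : list T) (f : T -> C) : Cmod (sumC s f) <= sumR s (fun x => Cmod (f x)).
Proof. induction s; simpl. rewrite Cmod_0; lra. eapply Rle_trans; [apply Cmod_triangle|]. lra. Qed.
Lemma sumC_RtoC (s : list T) (f : T -> R) : sumC s (fun x => RtoC (f x)) = RtoC (sumR s f).
Proof. induction s; simpl; auto. rewrite IHs. unfold RtoC, Cplus; simpl. f_equal; ring. Qed.
End SumC.
Lemma sumC_swap {T U : Type} (s : list T) (t : list U) (f : T -> U -> C) :
  sumC s (fun x => sumC t (fun y => f x y)) = sumC t (fun y => sumC s (fun x => f x y)).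
Proof. induction s; simpl. symmetry; apply sumC_0; auto. rewrite IHs, <- sumC_plus. reflexivity. Qed.

Lemma In_mrange l z : In z (mrange l) <-> (- Z.of_nat l <= z <= Z.of_nat l)%Z.
Proof. unfold mrange. rewrite in_map_iff. split.
  - intros [k [<- Hk]]. apply in_seq in Hk. lia.
  - intros H. exists (Z.to_nat (z + Z.of_nat l)). split; [lia|]. apply in_seq. lia. Qed.

Lemma NoDup_mrange l : NoDup (mrange l).
Proof. unfold mrange. apply FinFun.Injective_map_NoDup; [|apply seq_NoDup].
  intros x y H. lia. Qed.

Lemma In_idx Lam a : In a (idx Lam) <-> valid Lam a.
Proof. unfold idx, valid. rewrite in_flat_map. split.
  - intros [l [Hl Ha]]. apply in_seq in Hl. simpl in Hl. apply in_map_iff in Ha. destruct Ha as [m [<- Hm]].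
    apply In_mrange in Hm. simpl. lia.
  - destruct a as [l m]; cbn [fst snd]; intros [H1 H2]. exists l. split; [apply in_seq; simpl; lia|].
    apply in_map_iff. exists m. split; auto. apply In_mrange; auto. Qed.

Lemma NoDup_idx Lam : NoDup (idx Lam).
Proof. unfold idx. generalize 0%nat. induction (S Lam); intros s; simpl; [constructor|].
  apply NoDup_app.
  - apply FinFun.Injective_map_NoDup; [intros x y H; inversion H; auto| apply NoDup_mrange].
  - apply IHn.
  - intros x Hx Hx2. apply in_map_iff in Hx. destruct Hx as [m [<- _]].
    apply in_flat_map in Hx2. destruct Hx2 as [l [Hl Hm]]. apply in_seq in Hl.
    apply in_map_iff in Hm. destruct Hm as [m' [Heq _]]. inversion Heq. lia. Qed.

Lemma sumR_idx Lam (f : ix -> R) : sumR (idx Lam) f = sumR (seq 0 (S Lam)) (fun l => sumR (mrange l) (fun m => f (l, m))).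
Proof. unfold idx. rewrite sumR_flat_map. apply sumR_ext. intros. rewrite sumR_map. reflexivity. Qed.

Lemma term_le_exp (y : R) (n : nat) : 0 <= y -> y ^ n / INR (fact n) <= exp y.
Proof. intros Hy. eapply Rle_trans; [|apply (exp_ge_taylor y n Hy)].
  destruct n. simpl; lra.
  rewrite tech5. assert (0 <= sum_f_R0 (fun k => y ^ k / INR (fact k)) n).
  { apply cond_pos_sum. intros k. apply Rmult_le_pos; [apply pow_le; auto|].
    apply Rlt_le, Rinv_0_lt_compat, lt_0_INR, lt_O_fact. }
  lra. Qed.

Lemma radius_inf (a : nat -> R) (K Q : R) :
  (forall k, Rabs (a k) <= K * Q ^ k / INR (fact k)) -> forall t, Rbar_lt (Rabs t) (CV_radius a).
Proof. intros Hb t. apply Rbar_lt_le_trans with (Rabs t + 1). simpl; lra.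
  destruct (CV_radius_bounded a) as [Hub _]. apply Hub.
  exists (Rabs K * exp (Rabs Q * (Rabs t + 1))). intros n.
  assert (Hr : 0 <= Rabs t + 1) by (pose proof (Rabs_pos t); lra).
  rewrite Rabs_mult, <- RPow_abs, (Rabs_right (Rabs t + 1)) by lra.
  eapply Rle_trans. apply Rmult_le_compat_r. apply pow_le; auto. apply Hb.
  eapply Rle_trans with (Rabs K * ((Rabs Q * (Rabs t + 1)) ^ n / INR (fact n))).
  - rewrite Rpow_mult_distr. unfold Rdiv.
    assert (0 < / INR (fact n)) by (apply Rinv_0_lt_compat, lt_0_INR, lt_O_fact).
    assert (K * Q ^ n <= Rabs K * Rabs Q ^ n).
    { rewrite RPow_abs, <- Rabs_mult. apply Rle_abs. }
    assert (0 <= (Rabs t + 1) ^ n) by (apply pow_le; auto).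
    replace (Rabs K * (Rabs Q ^ n * (Rabs t + 1) ^ n * / INR (fact n))) with (Rabs K * Rabs Q ^ n * / INR (fact n) * (Rabs t + 1) ^ n) by ring.
    apply Rmult_le_compat_r; auto. apply Rmult_le_compat_r; lra.
  - apply Rmult_le_compat_l. apply Rabs_pos. apply term_le_exp.
    apply Rmult_le_pos; auto. apply Rabs_pos. Qed.

Lemma PSeries_sumR {T : Type} (s : list T) (g : T -> nat -> R) t :
  (forall e, In e s -> ex_pseries (g e) t) ->
  PSeries (fun k => sumR s (fun e => g e k)) t = sumR s (fun e => PSeries (g e) t)
  /\ ex_pseries (fun k => sumR s (fun e => g e k)) t.
Proof. induction s; simpl; intros H.
  - rewrite PSeries_const_0. split; auto. apply (ex_pseries_ext (fun _ => 0)); auto.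
    apply CV_radius_inside. rewrite CV_radius_const_0. simpl; auto.
  - destruct IHs as [IH1 IH2]. intros; auto.
    split.
    + rewrite <- IH1. rewrite <- (PSeries_plus (g a) (fun k => sumR s (fun e => g e k))); auto.
    + apply (ex_pseries_ext (PS_plus (g a) (fun k => sumR s (fun e => g e k)))).
      intros; reflexivity. apply ex_pseries_plus; auto. Qed.

Section Expm.
Variable Lam : nat.
Variable Z : mat.

Definition Em (t : R) : mat := expm Lam (mscale (RtoC t) Z).
Definition cR (a c : ix) (k : nat) : R := Re (mpow Lam Z k a c) / INR (fact k).
Definition cI (a c : ix) (k : nat) : R := Im (mpow Lam Z k a c) / INR (fact k).

Lemma mpow_scal t k a c : mpow Lam (mscale (RtoC t) Z) k a c = (RtoC (t ^ k) * mpow Lam Z k a c)%C.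
Proof. revert a c; induction k; intros a c; simpl.
  - unfold RtoC. apply injective_projections; simpl; ring.
  - unfold mmul. rewrite <- sumC_scal. apply sumC_ext. intros e _. rewrite IHk. unfold mscale.
    rewrite RtoC_mult. ring. Qed.

Lemma partial_Re t n a c : Re (expm_partial Lam (mscale (RtoC t) Z) n a c) = sum_n (fun k => cR a c k * t ^ k) n.
Proof. induction n.
  - rewrite sum_O. simpl. unfold cR. simpl. field.
  - rewrite sum_Sn. change (expm_partial Lam ?A (S n) a c) with (expm_partial Lam A n a c + RtoC (/ INR (fact (S n))) * mpow Lam A (S n) a c)%C.
    rewrite re_plus, IHn. change plus with Rplus. f_equal.
    rewrite re_scal_l, mpow_scal, re_scal_l. unfold cR. field. apply INR_fact_neq_0. Qed.

Lemma partial_Im t n a c : Im (expm_partial Lam (mscale (RtoC t) Z) n a c) = sum_n (fun k => cI a c k * t ^ k) n.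
Proof. induction n.
  - rewrite sum_O. simpl. unfold cI. simpl. field.
  - rewrite sum_Sn. change (expm_partial Lam ?A (S n) a c) with (expm_partial Lam A n a c + RtoC (/ INR (fact (S n))) * mpow Lam A (S n) a c)%C.
    rewrite im_plus, IHn. change plus with Rplus. f_equal.
    rewrite im_scal_l, mpow_scal, im_scal_l. unfold cI. field. apply INR_fact_neq_0. Qed.

Lemma Em_Re t a c : Re (Em t a c) = PSeries (cR a c) t.
Proof. unfold Em, expm, PSeries, Series. simpl. f_equal. apply Lim_seq_ext. intros n. rewrite <- partial_Re. reflexivity. Qed.
Lemma Em_Im t a c : Im (Em t a c) = PSeries (cI a c) t.
Proof. unfold Em, expm, PSeries, Series. simpl. f_equal. apply Lim_seq_ext. intros n. rewrite <- partial_Im. reflexivity. Qed.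

Definition Qz : R := 1 + sumR (idx Lam) (fun a => sumR (idx Lam) (fun e => Cmod (Z a e))).
Definition Ca (a : ix) : R := 1 + sumR (idx Lam) (fun e => Cmod (Z a e)).

Lemma Qz_ge1 : 1 <= Qz.
Proof. unfold Qz. pose proof (sumR_nonneg (idx Lam) (fun a => sumR (idx Lam) (fun e => Cmod (Z a e)))).
  assert (0 <= sumR (idx Lam) (fun a => sumR (idx Lam) (fun e => Cmod (Z a e)))).
  apply H. intros; apply sumR_nonneg; intros; apply Cmod_ge_0. lra. Qed.

Lemma Ca_le e : In e (idx Lam) -> Ca e <= Qz.
Proof. intros He. unfold Ca, Qz. apply Rplus_le_compat_l.
  apply (sumR_ge_term (idx Lam) (fun a => sumR (idx Lam) (fun e => Cmod (Z a e)))); auto.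
  intros; apply sumR_nonneg; intros; apply Cmod_ge_0. Qed.

Lemma pow_bound k a c : Cmod (mpow Lam Z k a c) <= Ca a * Qz ^ k.
Proof. revert a c; induction k; intros a c; simpl.
  - unfold idm. assert (1 <= Ca a). { unfold Ca. pose proof (sumR_nonneg (idx Lam) (fun e => Cmod (Z a e))).
      assert (0 <= sumR (idx Lam) (fun e : ix => Cmod (Z a e))) by (apply H; intros; apply Cmod_ge_0). lra. }
    destruct (ix_eqb a c); [rewrite Cmod_1|rewrite Cmod_0]; lra.
  - unfold mmul. eapply Rle_trans; [apply Cmod_sumC|].
    eapply Rle_trans with (sumR (idx Lam) (fun e => Cmod (Z a e) * (Qz * Qz ^ k))).
    + apply sumR_le. intros e He. rewrite Cmod_mult. apply Rmult_le_compat_l; [apply Cmod_ge_0|].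
      eapply Rle_trans; [apply IHk|]. apply Rmult_le_compat_r. apply pow_le. pose proof Qz_ge1; lra.
      apply Ca_le; auto.
    + rewrite (sumR_ext _ _ (fun e => (Qz * Qz ^ k) * Cmod (Z a e))) by (intros; ring).
      rewrite sumR_scal. unfold Ca. assert (0 <= Qz * Qz ^ k). { apply Rmult_le_pos; [|apply pow_le]; pose proof Qz_ge1; lra. }
      nra. Qed.

Lemma im_le_Cmod (c : C) : Rabs (Im c) <= Cmod c.
Proof. unfold Cmod. rewrite <- sqrt_Rsqr_abs. apply sqrt_le_1_alt. unfold Rsqr. destruct c as [x y]. simpl. pose proof (Rle_0_sqr x). unfold Rsqr in *. lra. Qed.

Lemma cR_bound a c k : Rabs (cR a c k) <= Ca a * Qz ^ k / INR (fact k).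
Proof. unfold cR. unfold Rdiv. rewrite Rabs_mult, (Rabs_right (/ _)).
  apply Rmult_le_compat_r. left; apply Rinv_0_lt_compat, lt_0_INR, lt_O_fact.
  eapply Rle_trans; [apply re_le_Cmod|apply pow_bound].
  left; apply Rinv_0_lt_compat, lt_0_INR, lt_O_fact. Qed.
Lemma cI_bound a c k : Rabs (cI a c k) <= Ca a * Qz ^ k / INR (fact k).
Proof. unfold cI. unfold Rdiv. rewrite Rabs_mult, (Rabs_right (/ _)).
  apply Rmult_le_compat_r. left; apply Rinv_0_lt_compat, lt_0_INR, lt_O_fact.
  eapply Rle_trans; [apply im_le_Cmod|apply pow_bound].
  left; apply Rinv_0_lt_compat, lt_0_INR, lt_O_fact. Qed.

Lemma cR_rad a c t : Rbar_lt (Rabs t) (CV_radius (cR a c)).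
Proof. apply (radius_inf _ (Ca a) Qz). apply cR_bound. Qed.
Lemma cI_rad a c t : Rbar_lt (Rabs t) (CV_radius (cI a c)).
Proof. apply (radius_inf _ (Ca a) Qz). apply cI_bound. Qed.

Lemma PSd_cR a c k : PS_derive (cR a c) k = sumR (idx Lam) (fun e => Re (Z a e) * cR e c k - Im (Z a e) * cI e c k).
Proof. unfold PS_derive, cR, cI.
  change (mpow Lam Z (S k) a c) with (sumC (idx Lam) (fun e => Z a e * mpow Lam Z k e c)%C).
  rewrite Re_sumC.
  rewrite (sumR_ext _ (fun x => Re (Z a x * mpow Lam Z k x c)%C) (fun e => Re (Z a e) * Re (mpow Lam Z k e c) - Im (Z a e) * Im (mpow Lam Z k e c))) by (intros; apply re_mult).
  rewrite (sumR_ext _ (fun e => Re (Z a e) * (Re (mpow Lam Z k e c) / INR (fact k)) - Im (Z a e) * (Im (mpow Lam Z k e c) / INR (fact k)))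
     (fun e => / INR (fact k) * (Re (Z a e) * Re (mpow Lam Z k e c) - Im (Z a e) * Im (mpow Lam Z k e c)))).
  2:{ intros; field. apply INR_fact_neq_0. }
  rewrite sumR_scal. rewrite fact_simpl, mult_INR. field. split; [apply INR_fact_neq_0|]. apply not_0_INR; lia. Qed.

Lemma PSd_cI a c k : PS_derive (cI a c) k = sumR (idx Lam) (fun e => Re (Z a e) * cI e c k + Im (Z a e) * cR e c k).
Proof. unfold PS_derive, cR, cI.
  change (mpow Lam Z (S k) a c) with (sumC (idx Lam) (fun e => Z a e * mpow Lam Z k e c)%C).
  rewrite Im_sumC.
  rewrite (sumR_ext _ (fun x => Im (Z a x * mpow Lam Z k x c)%C) (fun e => Re (Z a e) * Im (mpow Lam Z k e c) + Im (Z a e) * Re (mpow Lam Z k e c))) by (intros; apply im_mult).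
  rewrite (sumR_ext _ (fun e => Re (Z a e) * (Im (mpow Lam Z k e c) / INR (fact k)) + Im (Z a e) * (Re (mpow Lam Z k e c) / INR (fact k)))
     (fun e => / INR (fact k) * (Re (Z a e) * Im (mpow Lam Z k e c) + Im (Z a e) * Re (mpow Lam Z k e c)))).
  2:{ intros; field. apply INR_fact_neq_0. }
  rewrite sumR_scal. rewrite fact_simpl, mult_INR. field. split; [apply INR_fact_neq_0|]. apply not_0_INR; lia. Qed.

Lemma ex_ps_lin (p q : R) (u v : nat -> R) t : ex_pseries u t -> ex_pseries v t ->
  ex_pseries (fun k => p * u k + q * v k) t /\ PSeries (fun k => p * u k + q * v k) t = p * PSeries u t + q * PSeries v t.
Proof. intros Hu Hv. split.
  - apply (ex_pseries_ext (PS_plus (PS_scal p u) (PS_scal q v))). intros; reflexivity.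
    apply ex_pseries_plus; apply ex_pseries_scal; auto; apply Rmult_comm.
  - rewrite (PSeries_ext _ (PS_plus (PS_scal p u) (PS_scal q v))) by (intros; reflexivity).
    rewrite PSeries_plus, !PSeries_scal; auto; apply ex_pseries_scal; auto; apply Rmult_comm. Qed.

Lemma Em_Re_deriv t a c : is_derive (fun t => Re (Em t a c)) t
  (sumR (idx Lam) (fun e => Re (Z a e) * Re (Em t e c) - Im (Z a e) * Im (Em t e c))).
Proof. apply (is_derive_ext (PSeries (cR a c))). intros; rewrite Em_Re; auto.
  replace (sumR _ _) with (PSeries (PS_derive (cR a c)) t). apply is_derive_PSeries, cR_rad.
  rewrite (PSeries_ext _ _ _ (PSd_cR a c)).
  assert (Hex : forall e, In e (idx Lam) -> ex_pseries (fun k => Re (Z a e) * cR e c k - Im (Z a e) * cI e c k) t).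
  { intros e _. apply (ex_pseries_ext (fun k => Re (Z a e) * cR e c k + (- Im (Z a e)) * cI e c k)). intros n; simpl; ring.
    apply (proj1 (ex_ps_lin _ _ _ _ t (CV_radius_inside _ _ (cR_rad e c t)) (CV_radius_inside _ _ (cI_rad e c t)))). }
  rewrite (proj1 (PSeries_sumR (idx Lam) (fun e k => Re (Z a e) * cR e c k - Im (Z a e) * cI e c k) t Hex)).
  apply sumR_ext. intros e _. rewrite Em_Re, Em_Im.
    rewrite (PSeries_ext _ (fun k => Re (Z a e) * cR e c k + (- Im (Z a e)) * cI e c k)) by (intros; ring).
    rewrite (proj2 (ex_ps_lin _ _ _ _ t (CV_radius_inside _ _ (cR_rad e c t)) (CV_radius_inside _ _ (cI_rad e c t)))). ring. Qed.

Lemma Em_Im_deriv t a c : is_derive (fun t => Im (Em t a c)) t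
  (sumR (idx Lam) (fun e => Re (Z a e) * Im (Em t e c) + Im (Z a e) * Re (Em t e c))).
Proof. apply (is_derive_ext (PSeries (cI a c))). intros; rewrite Em_Im; auto.
  replace (sumR _ _) with (PSeries (PS_derive (cI a c)) t). apply is_derive_PSeries, cI_rad.
  rewrite (PSeries_ext _ _ _ (PSd_cI a c)).
  assert (Hex : forall e, In e (idx Lam) -> ex_pseries (fun k => Re (Z a e) * cI e c k + Im (Z a e) * cR e c k) t).
  { intros e _.
    apply (proj1 (ex_ps_lin _ _ _ _ t (CV_radius_inside _ _ (cI_rad e c t)) (CV_radius_inside _ _ (cR_rad e c t)))). }
  rewrite (proj1 (PSeries_sumR (idx Lam) (fun e k => Re (Z a e) * cI e c k + Im (Z a e) * cR e c k) t Hex)).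
  apply sumR_ext. intros e _. rewrite Em_Re, Em_Im.
    rewrite (proj2 (ex_ps_lin _ _ _ _ t (CV_radius_inside _ _ (cI_rad e c t)) (CV_radius_inside _ _ (cR_rad e c t)))). ring. Qed.

Lemma Em_0 a c : Em 0 a c = idm a c.
Proof. apply injective_projections.
  - change (Re (Em 0 a c) = Re (idm a c)). rewrite Em_Re, PSeries_0. unfold cR; simpl. field.
  - change (Im (Em 0 a c) = Im (idm a c)). rewrite Em_Im, PSeries_0. unfold cI; simpl. field. Qed.

Lemma Em_Re_zero t a c : (forall k, Re (mpow Lam Z k a c) = 0) -> Re (Em t a c) = 0.
Proof. intros H. rewrite Em_Re. rewrite (PSeries_ext _ (fun _ => 0)). apply PSeries_const_0.
  intros; unfold cR; rewrite H; unfold Rdiv; ring. Qed.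
Lemma Em_Im_zero t a c : (forall k, Im (mpow Lam Z k a c) = 0) -> Im (Em t a c) = 0.
Proof. intros H. rewrite Em_Im. rewrite (PSeries_ext _ (fun _ => 0)). apply PSeries_const_0.
  intros; unfold cI; rewrite H; unfold Rdiv; ring. Qed.

End Expm.

Lemma deriv0_const (h : R -> R) : (forall t, is_derive h t 0) -> forall t, h t = h 0.
Proof. intros H t.
  assert (H1 : is_RInt (fun _ => 0) 0 t (minus (h t) (h 0))).
  { apply (is_RInt_derive h (fun _ => 0)). intros; apply H. intros; apply continuous_const. }
  pose proof (is_RInt_const 0 t 0) as H2.
  apply (is_RInt_unique (V := R_CompleteNormedModule)) in H1. apply (is_RInt_unique (V := R_CompleteNormedModule)) in H2. rewrite H1 in H2.
  unfold minus, plus, opp, scal in H2; simpl in H2. unfold mult in H2; simpl in H2. lra. Qed.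

Definition lix (a : ix) : Z := Z.of_nat (fst a).
Definition mix (a : ix) : Z := snd a.
Definition am (a : ix) : ix := (fst a, (snd a - 1)%Z).
Definition ap (a : ix) : ix := (fst a, (snd a + 1)%Z).

Definition lpR (a b : ix) : R :=
  let l := Z.of_nat (fst b) in let m := snd b in
  if Nat.eqb (fst a) (fst b) && Z.eqb (snd a) (m + 1)%Z then sqrt (IZR ((l - m) * (l + m + 1))) else 0.
Definition lmR (a b : ix) : R :=
  let l := Z.of_nat (fst b) in let m := snd b in
  if Nat.eqb (fst a) (fst b) && Z.eqb (snd a) (m - 1)%Z then sqrt (IZR ((l + m) * (l - m + 1))) else 0.

Lemma Lp_R a b : Lp a b = RtoC (lpR a b).
Proof. unfold Lp, lpR. destruct (_ && _); reflexivity. Qed.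
Lemma Lm_R a b : Lm a b = RtoC (lmR a b).
Proof. unfold Lm, lmR. destruct (_ && _); reflexivity. Qed.

Lemma lpR_lmR a b : lpR a b = lmR b a.
Proof. unfold lpR, lmR. destruct a as [la ma], b as [lb mb]; simpl.
  destruct (Nat.eqb_spec la lb); destruct (Z.eqb_spec ma (mb + 1)); destruct (Nat.eqb_spec lb la); destruct (Z.eqb_spec mb (ma - 1));
  simpl; try lia; auto. subst. f_equal. f_equal. lia. Qed.

Definition lpf (a : ix) : R := sqrt (IZR ((lix a - (mix a - 1)) * (lix a + (mix a - 1) + 1))).
Definition lmf (a : ix) : R := sqrt (IZR ((lix a + (mix a + 1)) * (lix a - (mix a + 1) + 1))).

Lemma lpR_am a : lpR a (am a) = lpf a.
Proof. unfold lpR, lpf, am, lix, mix; simpl. rewrite Nat.eqb_refl. replace (snd a - 1 + 1)%Z with (snd a) by lia.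
  rewrite Z.eqb_refl. reflexivity. Qed.
Lemma lmR_ap a : lmR a (ap a) = lmf a.
Proof. unfold lmR, lmf, ap, lix, mix; simpl. rewrite Nat.eqb_refl. replace (snd a + 1 - 1)%Z with (snd a) by lia.
  rewrite Z.eqb_refl. reflexivity. Qed.
Lemma lpR_other a e : e <> am a -> lpR a e = 0.
Proof. unfold lpR, am. destruct a as [la ma], e as [le me]; simpl. intros H.
  destruct (Nat.eqb_spec la le); destruct (Z.eqb_spec ma (me + 1)); simpl; auto. subst. exfalso; apply H. f_equal; lia. Qed.
Lemma lmR_other a e : e <> ap a -> lmR a e = 0.
Proof. unfold lmR, ap. destruct a as [la ma], e as [le me]; simpl. intros H.
  destruct (Nat.eqb_spec la le); destruct (Z.eqb_spec ma (me - 1)); simpl; auto. subst. exfalso; apply H. f_equal; lia. Qed.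

Lemma lpf_out Lam a : In a (idx Lam) -> ~ In (am a) (idx Lam) -> lpf a = 0.
Proof. rewrite !In_idx. unfold valid, am, lpf, lix, mix; simpl. intros [H1 H2] H3.
  assert (snd a = - Z.of_nat (fst a))%Z by (destruct (Z.eq_dec (snd a) (- Z.of_nat (fst a)))%Z; auto; exfalso; apply H3; lia).
  rewrite H. replace ((Z.of_nat (fst a) + (- Z.of_nat (fst a) - 1) + 1))%Z with 0%Z by lia. rewrite Z.mul_0_r. apply sqrt_0. Qed.
Lemma lmf_out Lam a : In a (idx Lam) -> ~ In (ap a) (idx Lam) -> lmf a = 0.
Proof. rewrite !In_idx. unfold valid, ap, lmf, lix, mix; simpl. intros [H1 H2] H3.
  assert (snd a = Z.of_nat (fst a))%Z by (destruct (Z.eq_dec (snd a) (Z.of_nat (fst a)))%Z; auto; exfalso; apply H3; lia).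
  rewrite H. replace ((Z.of_nat (fst a) - (Z.of_nat (fst a) + 1) + 1))%Z with 0%Z by lia. rewrite Z.mul_0_r. apply sqrt_0. Qed.

Lemma shift_p Lam a (v : ix -> R) : In a (idx Lam) -> sumR (idx Lam) (fun e => lpR a e * v e) = lpf a * v (am a).
Proof. intros Ha. destruct (In_dec ix_eq_dec (am a) (idx Lam)) as [Hi|Hn].
  - rewrite (sumR_single _ _ (am a)); auto. rewrite lpR_am; auto. apply NoDup_idx.
    intros; rewrite lpR_other; auto; ring.
  - rewrite (sumR_notin _ _ (am a)); auto. rewrite (lpf_out Lam a); auto; ring.
    intros; rewrite lpR_other; auto; ring. Qed.
Lemma shift_m Lam a (v : ix -> R) : In a (idx Lam) -> sumR (idx Lam) (fun e => lmR a e * v e) = lmf a * v (ap a).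
Proof. intros Ha. destruct (In_dec ix_eq_dec (ap a) (idx Lam)) as [Hi|Hn].
  - rewrite (sumR_single _ _ (ap a)); auto. rewrite lmR_ap; auto. apply NoDup_idx.
    intros; rewrite lmR_other; auto; ring.
  - rewrite (sumR_notin _ _ (ap a)); auto. rewrite (lmf_out Lam a); auto; ring.
    intros; rewrite lmR_other; auto; ring. Qed.

Lemma lmf_am a : lmf (am a) = lpf a.
Proof. unfold lmf, lpf, am, lix, mix; simpl. f_equal. f_equal. lia. Qed.
Lemma lpf_ap a : lpf (ap a) = lmf a.
Proof. unfold lmf, lpf, ap, lix, mix; simpl. f_equal. f_equal. lia. Qed.

Lemma lpf_sq Lam a : In a (idx Lam) -> lpf a * lpf a = IZR ((lix a - mix a + 1) * (lix a + mix a)).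
Proof. rewrite In_idx; unfold valid, lpf, lix, mix; intros [H1 H2]. rewrite sqrt_sqrt.
  f_equal; lia. apply IZR_le. apply Z.mul_nonneg_nonneg; lia. Qed.
Lemma lmf_sq Lam a : In a (idx Lam) -> lmf a * lmf a = IZR ((lix a + mix a + 1) * (lix a - mix a)).
Proof. rewrite In_idx; unfold valid, lmf, lix, mix; intros [H1 H2]. rewrite sqrt_sqrt.
  f_equal; lia. apply IZR_le. apply Z.mul_nonneg_nonneg; lia. Qed.

Lemma am_in_or Lam a : In a (idx Lam) -> In (am a) (idx Lam) \/ lpf a = 0.
Proof. intros H. destruct (In_dec ix_eq_dec (am a) (idx Lam)); auto. right; eapply lpf_out; eauto. Qed.
Lemma ap_in_or Lam a : In a (idx Lam) -> In (ap a) (idx Lam) \/ lmf a = 0.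
Proof. intros H. destruct (In_dec ix_eq_dec (ap a) (idx Lam)); auto. right; eapply lmf_out; eauto. Qed.

Definition Xr (a b : ix) : R := (lpR a b - lmR a b) / 2.
Definition Z2 : mat := mscale Ci L2.
Lemma Z2_R a b : Z2 a b = RtoC (Xr a b).
Proof. unfold Z2, mscale, L2, Xr. rewrite Lp_R, Lm_R. apply injective_projections; simpl; field. Qed.
Lemma Xr_anti a b : Xr a b = - Xr b a.
Proof. unfold Xr. rewrite (lpR_lmR a b), (lpR_lmR b a). lra. Qed.

Lemma mscale_L2 t : mscale (Ci * RtoC t) L2 = mscale (RtoC t) Z2.
Proof. apply functional_extensionality; intros a; apply functional_extensionality; intros b.
  unfold Z2, mscale. ring. Qed.

Definition E2 (Lam : nat) (t : R) : mat := Em Lam Z2 t.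
Definition dd (Lam : nat) (t : R) (a c : ix) : R := Re (E2 Lam t a c).

Lemma mpow_Z2_Im Lam k a c : Im (mpow Lam Z2 k a c) = 0.
Proof. revert a c; induction k; intros a c; cbn [mpow].
  - unfold idm. destruct (ix_eqb a c); reflexivity.
  - unfold mmul. rewrite Im_sumC. apply sumR_0. intros e _. rewrite im_mult, IHk, Z2_R. simpl. ring. Qed.

Lemma E2_real Lam t a c : E2 Lam t a c = RtoC (dd Lam t a c).
Proof. unfold dd. apply injective_projections; auto. change (Im (E2 Lam t a c) = 0). unfold E2. apply (Em_Im_zero Lam Z2). intros; apply mpow_Z2_Im. Qed.

Lemma dd_deriv Lam t a c : is_derive (fun t => dd Lam t a c) t (sumR (idx Lam) (fun e => Xr a e * dd Lam t e c)).
Proof. unfold dd, E2. replace (sumR _ _) with (sumR (idx Lam) (fun e => Re (Z2 a e) * Re (Em Lam Z2 t e c) - Im (Z2 a e) * Im (Em Lam Z2 t e c))).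
  apply Em_Re_deriv. apply sumR_ext. intros e _. rewrite Z2_R. simpl. ring. Qed.

Lemma dd_0 Lam a c : dd Lam 0 a c = if ix_eqb a c then 1 else 0.
Proof. unfold dd, E2. rewrite Em_0. unfold idm. destruct (ix_eqb a c); reflexivity. Qed.

Lemma Xr_sum Lam a (v : ix -> R) : In a (idx Lam) ->
  sumR (idx Lam) (fun e => Xr a e * v e) = (lpf a * v (am a) - lmf a * v (ap a)) / 2.
Proof. intros Ha. unfold Xr. rewrite (sumR_ext _ _ (fun e => / 2 * (lpR a e * v e) + (- / 2) * (lmR a e * v e))) by (intros; field).
  rewrite sumR_plus, !sumR_scal, shift_p, shift_m; auto. field. Qed.

Lemma dd_deriv_s Lam t a c : In a (idx Lam) ->
  is_derive (fun t => dd Lam t a c) t ((lpf a * dd Lam t (am a) c - lmf a * dd Lam t (ap a) c) / 2).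
Proof. intros Ha. rewrite <- (Xr_sum Lam a (fun e => dd Lam t e c)); auto. apply dd_deriv. Qed.

Lemma dd_cont Lam a c t : continuous (fun t => dd Lam t a c) t.
Proof. apply (ex_derive_continuous (K:=R_AbsRing) (V:=R_NormedModule)). eexists; apply dd_deriv. Qed.

Lemma DRmult (f g : R -> R) t df dg : is_derive f t df -> is_derive g t dg ->
  is_derive (fun t => f t * g t) t (df * g t + f t * dg).
Proof. intros. apply (is_derive_mult f g t df dg); auto. intros; apply Rmult_comm. Qed.
Lemma DRplus (f g : R -> R) t df dg : is_derive f t df -> is_derive g t dg ->
  is_derive (fun t => f t + g t) t (df + dg).
Proof. intros. apply (is_derive_plus f g t df dg); auto. Qed.
Lemma DRminus (f g : R -> R) t df dg : is_derive f t df -> is_derive g t dg ->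
  is_derive (fun t => f t - g t) t (df - dg).
Proof. intros. apply (is_derive_minus f g t df dg); auto. Qed.
Lemma DRconst (k : R) t : is_derive (fun _ => k) t 0.
Proof. apply (is_derive_const (K:=R_AbsRing) (V:=R_NormedModule)). Qed.
Lemma DRext (f : R -> R) (t d dd0 : R) : d = dd0 -> is_derive f t d -> is_derive f t dd0.
Proof. intros ->; auto. Qed.
Lemma DRfext (f g : R -> R) t d : (forall t, f t = g t) -> is_derive f t d -> is_derive g t d.
Proof. intros H. apply is_derive_ext; auto. Qed.

Lemma DRdiv (f : R -> R) t df k : is_derive f t df -> is_derive (fun t => f t / k) t (df / k).
Proof. intros H. unfold Rdiv. eapply DRext; [|apply (DRmult f (fun _ => / k)); [apply H|apply DRconst]]. ring. Qed.

Lemma DRsum {T : Type} (s : list T) (f : T -> R -> R) (df : T -> R) t :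
  (forall x, In x s -> is_derive (f x) t (df x)) ->
  is_derive (fun t => sumR s (fun x => f x t)) t (sumR s df).
Proof. induction s; simpl; intros H. apply DRconst.
  apply DRplus; auto. Qed.

Lemma anti_sum Lam (u v : ix -> R) :
  sumR (idx Lam) (fun a => sumR (idx Lam) (fun e => Xr a e * (u e * v a + u a * v e))) = 0.
Proof.
  set (S := sumR (idx Lam) (fun a => sumR (idx Lam) (fun e => Xr a e * (u e * v a + u a * v e)))).
  assert (S = - S).
  { unfold S at 1. rewrite sumR_swap. replace (- S) with (-1 * S) by ring.
    unfold S. rewrite <- sumR_scal. apply sumR_ext. intros a _. rewrite <- sumR_scal. apply sumR_ext. intros e _.
    rewrite Xr_anti. ring. }
  lra. Qed.

Lemma ode_unique Lam (K : R -> ix -> R) :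
  (forall t a, In a (idx Lam) -> is_derive (fun t => K t a) t (sumR (idx Lam) (fun e => Xr a e * K t e))) ->
  (forall a, In a (idx Lam) -> K 0 a = 0) ->
  forall t a, In a (idx Lam) -> K t a = 0.
Proof. intros HD H0 t.
  set (N := fun t => sumR (idx Lam) (fun a => K t a ^ 2)).
  assert (HN : forall t, is_derive N t 0).
  { intros s. unfold N.
    eapply DRext; [|apply (DRsum (idx Lam) (fun a t => K t a ^ 2) (fun a => 2 * K s a * sumR (idx Lam) (fun e => Xr a e * K s e)))].
    - rewrite (sumR_ext _ _ (fun a => sumR (idx Lam) (fun e => Xr a e * (K s e * K s a + K s a * K s e)))).
      first [apply anti_sum | symmetry; apply anti_sum].
      intros a _. rewrite <- sumR_scal. apply sumR_ext. intros; ring.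
    - intros a Ha. eapply DRext; [|apply (DRmult (fun t => K t a) (fun t => K t a ^ 1))].
      2: apply HD; auto. 2: eapply DRext; [|apply DRmult; [apply HD; auto| apply DRconst]]; reflexivity.
      simpl. ring. }
  assert (N t = 0). { rewrite (deriv0_const N HN t). unfold N. apply sumR_0. intros a Ha; rewrite H0; auto; ring. }
  apply (sumR_sq0 (idx Lam) (K t)); auto. Qed.

Section Dmat.
Variable Lam : nat.
Notation d := (dd Lam).

Lemma dd_orth t c e : sumR (idx Lam) (fun a => d t a c * d t a e) = if ix_eqb c e then (if In_dec ix_eq_dec c (idx Lam) then 1 else 0) else 0.
Proof.
  set (P := fun t => sumR (idx Lam) (fun a => d t a c * d t a e)).
  assert (HP : forall t, is_derive P t 0).
  { intros s. unfold P. eapply DRext; [|apply (DRsum (idx Lam) (fun a t => d t a c * d t a e))].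
    2:{ intros a _. apply DRmult; apply dd_deriv. }
    rewrite (sumR_ext _ _ (fun a => sumR (idx Lam) (fun x => Xr a x * (d s x c * d s a e + d s a c * d s x e)))).
    first [apply anti_sum | symmetry; apply anti_sum].
    intros a _. rewrite (Rmult_comm (sumR _ _)). rewrite <- !sumR_scal, <- sumR_plus. apply sumR_ext. intros; ring. }
  transitivity (P t); [reflexivity|]. rewrite (deriv0_const P HP t). unfold P. rewrite !(sumR_ext _ _ (fun a => (if ix_eqb a c then 1 else 0) * (if ix_eqb a e then 1 else 0)))
    by (intros; rewrite !dd_0; auto).
  destruct (ix_eqb c e) eqn:Hce.
  - apply ix_eqb_spec in Hce; subst e. destruct (In_dec ix_eq_dec c (idx Lam)).
    + rewrite (sumR_single _ _ c); auto. rewrite ix_eqb_refl; ring. apply NoDup_idx.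
      intros x _ Hx. rewrite ix_eqb_neq; auto; ring.
    + apply sumR_0. intros x Hx. rewrite ix_eqb_neq. ring. intro; subst; tauto.
  - apply sumR_0. intros x _. destruct (ix_eqb x c) eqn:H1; destruct (ix_eqb x e) eqn:H2; try ring.
    apply ix_eqb_spec in H1; apply ix_eqb_spec in H2; subst. rewrite ix_eqb_refl in Hce; discriminate. Qed.

Lemma mpow_Z2_block k a c : fst a <> fst c -> mpow Lam Z2 k a c = 0%C.
Proof. revert a; induction k; intros a H; cbn [mpow].
  - unfold idm. rewrite ix_eqb_neq; auto. intro; subst; tauto.
  - unfold mmul. apply sumC_0. intros e _. rewrite Z2_R.
    destruct (Nat.eq_dec (fst e) (fst a)).
    + rewrite IHk by congruence. ring.
    + unfold Xr, lpR, lmR. destruct (Nat.eqb_spec (fst a) (fst e)); [congruence|]. simpl.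
      replace ((0 - 0) / 2) with 0 by field. unfold RtoC. apply injective_projections; simpl; ring. Qed.

Lemma dd_block t a c : fst a <> fst c -> d t a c = 0.
Proof. intros H. unfold dd, E2. apply Em_Re_zero. intros k. rewrite mpow_Z2_block; auto. Qed.

Lemma ap_am a : ap (am a) = a.
Proof. destruct a; unfold ap, am; simpl; f_equal; lia. Qed.
Lemma am_ap a : am (ap a) = a.
Proof. destruct a; unfold ap, am; simpl; f_equal; lia. Qed.
Lemma mix_am a : IZR (mix (am a)) = IZR (mix a) - 1.
Proof. unfold mix, am; simpl. rewrite minus_IZR; reflexivity. Qed.
Lemma mix_ap a : IZR (mix (ap a)) = IZR (mix a) + 1.
Proof. unfold mix, ap; simpl. rewrite plus_IZR; reflexivity. Qed.

(* general derivative evaluated in shift form, valid when multiplied by the coefficient *)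
Lemma Xr_sum_am t a c : In a (idx Lam) ->
  lpf a * sumR (idx Lam) (fun e => Xr (am a) e * d t e c) =
  lpf a * ((lpf (am a) * d t (am (am a)) c - lmf (am a) * d t a c) / 2).
Proof. intros Ha. destruct (am_in_or Lam a Ha) as [H|H].
  - rewrite Xr_sum; auto. rewrite ap_am; auto.
  - rewrite H; ring. Qed.
Lemma Xr_sum_ap t a c : In a (idx Lam) ->
  lmf a * sumR (idx Lam) (fun e => Xr (ap a) e * d t e c) =
  lmf a * ((lpf (ap a) * d t a c - lmf (ap a) * d t (ap (ap a)) c) / 2).
Proof. intros Ha. destruct (ap_in_or Lam a Ha) as [H|H].
  - rewrite Xr_sum; auto. rewrite am_ap; auto.
  - rewrite H; ring. Qed.

Local Opaque dd sin cos lpf lmf.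
Definition Kf (c : ix) (t : R) (a : ix) : R :=
  sin t * (lpf a * d t (am a) c + lmf a * d t (ap a) c) / 2 - (cos t * IZR (mix a) - IZR (mix c)) * d t a c.

Lemma Kf_deriv c t a : In a (idx Lam) ->
  is_derive (fun t => Kf c t a) t (sumR (idx Lam) (fun e => Xr a e * Kf c t e)).
Proof. intros Ha. unfold Kf.
  set (D1 := sumR (idx Lam) (fun e => Xr (am a) e * d t e c)).
  set (D2 := sumR (idx Lam) (fun e => Xr (ap a) e * d t e c)).
  set (D0 := sumR (idx Lam) (fun e => Xr a e * d t e c)).
  eapply DRext. 2:{ apply DRminus.
    - apply DRdiv. apply DRmult. apply is_derive_sin. apply DRplus; (apply DRmult; [apply DRconst| apply dd_deriv]).
    - apply DRmult. apply DRminus. apply DRmult. apply is_derive_cos. apply DRconst. apply DRconst. apply dd_deriv. }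
  fold D1 D2 D0. cbv beta.
  rewrite (Xr_sum Lam a (fun e => sin t * (lpf e * d t (am e) c + lmf e * d t (ap e) c) / 2 - (cos t * IZR (mix e) - IZR (mix c)) * d t e c)) by auto.
  cbv beta.
  assert (E1 := Xr_sum_am t a c Ha). assert (E2 := Xr_sum_ap t a c Ha). fold D1 in E1. fold D2 in E2.
  unfold D0. rewrite Xr_sum by auto. rewrite ap_am, am_ap in *.
  rewrite lmf_am, lpf_ap in *. rewrite mix_am, mix_ap.
  assert (HP := lpf_sq Lam a Ha). assert (HM := lmf_sq Lam a Ha).
  rewrite !mult_IZR, ?plus_IZR, ?minus_IZR in HP, HM. unfold lix in HP, HM.
  generalize dependent D1; intros D1 E1.
  generalize dependent D2; intros D2 E2.
  generalize dependent (lpf a); intros P HP E1.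
  generalize dependent (lmf a); intros M HM E2.
  generalize dependent (IZR (mix a)); intros m HP HM.
  generalize dependent (IZR (Z.of_nat (fst a))); intros l HP HM.
  rewrite E1, E2. clear E1 E2.
  generalize (IZR (mix c)) (d t (am a) c) (d t (ap a) c) (d t a c) (d t (am (am a)) c) (d t (ap (ap a)) c) (sin t) (cos t) (lpf (am a)) (lmf (ap a)).
  intros. apply Rminus_diag_uniq. transitivity (r5 * r2 * (-(P*P)/2 + M*M/2 + m)). field.
  rewrite HP, HM. field. Qed.

Lemma F2 t a c : In a (idx Lam) -> In c (idx Lam) ->
  sin t * (lpf a * d t (am a) c + lmf a * d t (ap a) c) / 2 = (cos t * IZR (mix a) - IZR (mix c)) * d t a c.
Proof. intros Ha Hc. assert (H := ode_unique Lam (Kf c) (fun t a Ha => Kf_deriv c t a Ha)).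
  assert (Kf c t a = 0). { apply H; auto. intros x Hx. unfold Kf. rewrite sin_0, cos_0, (dd_0 Lam x c).
    destruct (ix_eqb x c) eqn:E. apply ix_eqb_spec in E; subst. field. field. }
  unfold Kf in H0. lra. Qed.

End Dmat.

Lemma Kmult (f g : R -> R) t : continuous f t -> continuous g t -> continuous (fun t => f t * g t) t.
Proof. intros. apply (continuous_mult f g t); auto. Qed.
Lemma Kminus (f g : R -> R) t : continuous f t -> continuous g t -> continuous (fun t => f t - g t) t.
Proof. intros. apply (continuous_minus (K:=R_AbsRing) (V:=R_NormedModule) f g t); auto. Qed.
Lemma Kplus (f g : R -> R) t : continuous f t -> continuous g t -> continuous (fun t => f t + g t) t.
Proof. intros. apply (continuous_plus (K:=R_AbsRing) (V:=R_NormedModule) f g t); auto. Qed.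
Lemma Kconst (k t : R) : continuous (fun _ => k) t.
Proof. apply (continuous_const (U:=R_UniformSpace) (V:=R_UniformSpace)). Qed.

Lemma IRminus (f g : R -> R) a b (If Ig : R) : is_RInt f a b If -> is_RInt g a b Ig -> is_RInt (fun t => f t - g t) a b (If - Ig).
Proof. intros. apply (is_RInt_minus (V:=R_NormedModule) f g a b If Ig); auto. Qed.
Lemma IRplus (f g : R -> R) a b (If Ig : R) : is_RInt f a b If -> is_RInt g a b Ig -> is_RInt (fun t => f t + g t) a b (If + Ig).
Proof. intros. apply (is_RInt_plus (V:=R_NormedModule) f g a b If Ig); auto. Qed.
Lemma IRscal (f : R -> R) a b (k If : R) : is_RInt f a b If -> is_RInt (fun t => k * f t) a b (k * If).
Proof. intros. apply (is_RInt_scal (V:=R_NormedModule) f a b k If); auto. Qed.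
Lemma IRuniq (f : R -> R) a b (I1 I2 : R) : is_RInt f a b I1 -> is_RInt f a b I2 -> I1 = I2.
Proof. intros H1 H2. apply (is_RInt_unique (V:=R_CompleteNormedModule)) in H1. apply (is_RInt_unique (V:=R_CompleteNormedModule)) in H2. congruence. Qed.
Lemma IRext (f g : R -> R) a b (I : R) : (forall t, f t = g t) -> is_RInt f a b I -> is_RInt g a b I.
Proof. intros H. apply (is_RInt_ext (V:=R_NormedModule)). intros; apply H. Qed.
Lemma IRconst0 a b : is_RInt (fun _ => 0) a b 0.
Proof. pose proof (is_RInt_const (V:=R_NormedModule) a b 0) as H.
  unfold scal in H; simpl in H; unfold mult in H; simpl in H. rewrite Rmult_0_r in H. exact H. Qed.
Lemma IRsum {T : Type} (s : list T) (f : T -> R -> R) (I : T -> R) a b :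
  (forall x, In x s -> is_RInt (f x) a b (I x)) -> is_RInt (fun t => sumR s (fun x => f x t)) a b (sumR s I).
Proof. induction s; simpl; intros H. apply IRconst0. apply IRplus; auto. Qed.
Lemma IRcont (f : R -> R) a b : (forall t, continuous f t) -> is_RInt f a b (RInt f a b).
Proof. intros H. apply (RInt_correct (V:=R_CompleteNormedModule)). apply (ex_RInt_continuous (V:=R_CompleteNormedModule)). intros; apply H. Qed.
Lemma IRftc (f df : R -> R) a b : (forall t, is_derive f t (df t)) -> (forall t, continuous df t) ->
  is_RInt df a b (f b - f a).
Proof. intros H1 H2. apply (is_RInt_derive (V:=R_CompleteNormedModule) f df a b); intros; auto. Qed.

Lemma IRsin : is_RInt sin 0 PI 2.
Proof. replace 2 with ((- cos PI) - (- cos 0)) by (rewrite cos_PI, cos_0; ring).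
  apply (IRftc (fun t => - cos t) sin). intros t. apply (DRfext (fun t => 0 - cos t)). intros; ring.
  eapply DRext; [|apply DRminus; [apply DRconst|apply is_derive_cos]]. ring.
  intros; apply continuous_sin. Qed.

Section Sint.
Variable Lam : nat.
Notation d := (dd Lam).

Definition Sf (c1 c2 a b : ix) (t : R) : R := sin t * d t a c1 * d t b c2.
Definition S (c1 c2 a b : ix) : R := RInt (Sf c1 c2 a b) 0 PI.

Lemma Sf_cont c1 c2 a b t : continuous (Sf c1 c2 a b) t.
Proof. unfold Sf. apply Kmult; [apply Kmult|]; try apply dd_cont. apply continuous_sin. Qed.

Lemma S_is c1 c2 a b : is_RInt (Sf c1 c2 a b) 0 PI (S c1 c2 a b).
Proof. apply IRcont. apply Sf_cont. Qed.

Lemma S2 a b c1 c2 : In a (idx Lam) -> In b (idx Lam) -> In c1 (idx Lam) -> In c2 (idx Lam) ->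
  mix a = (mix b + 1)%Z -> mix c1 = mix c2 ->
  lpf a * S c1 c2 (am a) b = lmf b * S c1 c2 a (ap b).
Proof. intros Ha Hb Hc1 Hc2 Hab Hc.
  set (G := fun t => sin t * d t a c1 * d t b c2).
  set (T := fun t => lpf a * Sf c1 c2 (am a) b t - lmf b * Sf c1 c2 a (ap b) t).
  assert (HG : forall t, is_derive G t (T t)).
  { intros t. unfold G.
    eapply DRext; [|apply DRmult; [apply DRmult; [apply is_derive_sin| apply dd_deriv_s; auto]| apply dd_deriv_s; auto]].
    assert (Fa := F2 Lam t a c1 Ha Hc1). assert (Fb := F2 Lam t b c2 Hb Hc2).
    unfold T, Sf.
    transitivity (cos t * d t a c1 * d t b c2 - (sin t * (lpf a * d t (am a) c1 + lmf a * d t (ap a) c1) / 2) * d t b c2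
       + d t a c1 * (sin t * (lpf b * d t (am b) c2 + lmf b * d t (ap b) c2) / 2)
       + sin t * (lpf a * d t (am a) c1 * d t b c2 - lmf b * d t a c1 * d t (ap b) c2)).
    field. rewrite Fa, Fb. rewrite Hab, Hc, plus_IZR. ring. }
  assert (HI := IRftc G T 0 PI HG).
  assert (HT : forall t, continuous T t). { intros t. unfold T. apply Kminus; apply Kmult; try apply Kconst; apply Sf_cont. }
  specialize (HI HT). unfold G in HI. rewrite sin_PI, sin_0 in HI.
  assert (HI2 := IRminus _ _ 0 PI _ _ (IRscal _ 0 PI (lpf a) _ (S_is c1 c2 (am a) b)) (IRscal _ 0 PI (lmf b) _ (S_is c1 c2 a (ap b)))).
  assert (Heq := IRuniq _ _ _ _ _ HI HI2). lra. Qed.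

Lemma S_block c1 c2 a b : fst a <> fst c1 -> S c1 c2 a b = 0.
Proof. intros H. apply (IRuniq (Sf c1 c2 a b) 0 PI). apply S_is.
  apply (IRext (fun _ => 0)). intros t. unfold Sf. rewrite dd_block; auto. ring. apply IRconst0. Qed.

Lemma dd_block_sum t l c1 c2 : In c1 (idx Lam) -> (l <= Lam)%nat ->
  sumR (mrange l) (fun m => d t (l, m) c1 * d t (l, m) c2) = if Nat.eqb l (fst c1) then (if ix_eqb c1 c2 then 1 else 0) else 0.
Proof. intros Hc1 Hl. destruct (Nat.eqb_spec l (fst c1)).
  - pose proof (dd_orth Lam t c1 c2) as H. destruct (In_dec ix_eq_dec c1 (idx Lam)); [|tauto].
    rewrite sumR_idx in H. rewrite (sumR_single _ _ l) in H; auto. apply seq_NoDup. apply in_seq; lia.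
    intros l' _ Hl'. apply sumR_0. intros m _. rewrite dd_block. ring. simpl. congruence.
  - apply sumR_0. intros m _. rewrite dd_block. ring. simpl. auto. Qed.

Lemma S_trace l c1 c2 : In c1 (idx Lam) -> (l <= Lam)%nat ->
  sumR (mrange l) (fun m => S c1 c2 (l, m) (l, m)) = 2 * (if Nat.eqb l (fst c1) then (if ix_eqb c1 c2 then 1 else 0) else 0).
Proof. intros Hc1 Hl. apply (IRuniq (fun t => sumR (mrange l) (fun m => Sf c1 c2 (l, m) (l, m) t)) 0 PI).
  apply IRsum. intros; apply S_is.
  apply (IRext (fun t => sin t * (if Nat.eqb l (fst c1) then (if ix_eqb c1 c2 then 1 else 0) else 0))).
  intros t. rewrite <- (dd_block_sum t l c1 c2) by auto. rewrite <- sumR_scal. apply sumR_ext. intros; unfold Sf; ring.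
  rewrite Rmult_comm. apply (IRext (fun t => (if Nat.eqb l (fst c1) then (if ix_eqb c1 c2 then 1 else 0) else 0) * sin t)).
  intros; ring. apply IRscal. apply IRsin. Qed.

End Sint.

Definition ex (x : R) : C := (cos x, sin x).

Definition Z3 : mat := mscale Ci L3.
Lemma mscale_L3 t : mscale (Ci * RtoC t) L3 = mscale (RtoC t) Z3.
Proof. apply functional_extensionality; intros a; apply functional_extensionality; intros b.
  unfold Z3, mscale. ring. Qed.
Definition E3 (Lam : nat) (t : R) : mat := Em Lam Z3 t.

Lemma Z3_off a b : a <> b -> Z3 a b = 0%C.
Proof. intros H. unfold Z3, mscale, L3. rewrite ix_eqb_neq; auto. ring. Qed.
Lemma Z3_diag a : Z3 a a = (0, IZR (snd a)).
Proof. unfold Z3, mscale, L3. rewrite ix_eqb_refl. apply injective_projections; simpl; ring. Qed.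

Lemma mpow_Z3_off Lam k a c : a <> c -> mpow Lam Z3 k a c = 0%C.
Proof. revert a; induction k; intros a H; cbn [mpow].
  - unfold idm. rewrite ix_eqb_neq; auto.
  - unfold mmul. apply sumC_0. intros e _. destruct (ix_eq_dec a e).
    + subst. rewrite IHk; auto. ring.
    + rewrite Z3_off; auto. ring. Qed.

Lemma E3_off Lam t a c : a <> c -> E3 Lam t a c = 0%C.
Proof. intros H. apply injective_projections.
  - change (Re (E3 Lam t a c) = 0). unfold E3. apply Em_Re_zero. intros; rewrite mpow_Z3_off; auto.
  - change (Im (E3 Lam t a c) = 0). unfold E3. apply Em_Im_zero. intros; rewrite mpow_Z3_off; auto. Qed.

Lemma Dsq (u : R -> R) t du : is_derive u t du -> is_derive (fun t => u t ^ 2) t (2 * u t * du).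
Proof. intros H. apply (DRfext (fun t => u t * u t)). intros; ring.
  apply (DRext _ t (du * u t + u t * du)). ring. apply DRmult; auto. Qed.

Lemma E3_diag Lam t a : In a (idx Lam) -> E3 Lam t a a = ex (IZR (snd a) * t).
Proof. intros Ha. set (m := IZR (snd a)).
  set (f := fun t => Re (E3 Lam t a a)). set (g := fun t => Im (E3 Lam t a a)).
  assert (Hf : forall t, is_derive f t (- m * g t)).
  { intros s. unfold f, E3. eapply DRext; [|apply Em_Re_deriv].
    rewrite (sumR_single _ _ a); auto. rewrite Z3_diag. unfold g, E3, m. cbn [Re Im fst snd RtoC]. ring. apply NoDup_idx.
    intros e _ He. rewrite Z3_off by auto. cbn [Re Im fst snd RtoC]. ring. }
  assert (Hg : forall t, is_derive g t (m * f t)).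
  { intros s. unfold g, E3. eapply DRext; [|apply Em_Im_deriv].
    rewrite (sumR_single _ _ a); auto. rewrite Z3_diag. unfold f, E3, m. cbn [Re Im fst snd RtoC]. ring. apply NoDup_idx.
    intros e _ He. rewrite Z3_off by auto. cbn [Re Im fst snd RtoC]. ring. }
  set (h := fun t => (f t - cos (m * t)) ^ 2 + (g t - sin (m * t)) ^ 2).
  assert (Hc : forall t, is_derive (fun t => cos (m * t)) t (- m * sin (m * t))).
  { intros s. auto_derive; auto. ring. }
  assert (Hs : forall t, is_derive (fun t => sin (m * t)) t (m * cos (m * t))).
  { intros s. auto_derive; auto. ring. }
  assert (Hh : forall t, is_derive h t 0).
  { intros s. unfold h.
    apply (DRext _ s (2 * (f s - cos (m * s)) * (- m * g s - (- m * sin (m * s))) + 2 * (g s - sin (m * s)) * (m * f s - m * cos (m * s)))).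
    ring.
    apply (DRplus (fun t => (f t - cos (m * t)) ^ 2) (fun t => (g t - sin (m * t)) ^ 2)).
    - apply (Dsq (fun t => f t - cos (m * t))). apply (DRminus f (fun t => cos (m * t))); auto.
    - apply (Dsq (fun t => g t - sin (m * t))). apply (DRminus g (fun t => sin (m * t))); auto. }
  pose proof (deriv0_const h Hh t) as H0. unfold h, f, g, E3 in H0.
  rewrite !Rmult_0_r, cos_0, sin_0 in H0. rewrite (Em_0 Lam Z3 a a) in H0. unfold idm in H0. rewrite ix_eqb_refl in H0.
  unfold E3, ex. fold m. unfold Re, Im, RtoC in H0. cbn [fst snd] in H0.
  assert (H1 : (fst (Em Lam Z3 t a a) - cos (m * t)) ^ 2 + (snd (Em Lam Z3 t a a) - sin (m * t)) ^ 2 = 0).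
  { rewrite H0. ring. }
  pose proof (pow2_ge_0 (fst (Em Lam Z3 t a a) - cos (m * t))). pose proof (pow2_ge_0 (snd (Em Lam Z3 t a a) - sin (m * t))).
  apply injective_projections; cbn [fst snd]; nra. Qed.

Lemma piL_entry Lam phi theta psi a c : In a (idx Lam) -> In c (idx Lam) ->
  piL Lam phi theta psi a c = (ex (IZR (snd a) * phi) * RtoC (dd Lam theta a c) * ex (IZR (snd c) * psi))%C.
Proof. intros Ha Hc. unfold piL. rewrite !mscale_L3, mscale_L2.
  change (expm Lam (mscale (RtoC phi) Z3)) with (E3 Lam phi).
  change (expm Lam (mscale (RtoC psi) Z3)) with (E3 Lam psi).
  change (expm Lam (mscale (RtoC theta) Z2)) with (E2 Lam theta).
  unfold mmul at 1. rewrite (sumC_single _ _ a); auto. 2: apply NoDup_idx.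
  2:{ intros e _ He. rewrite E3_off by auto. ring. }
  unfold mmul. rewrite (sumC_single _ _ c); auto. 2: apply NoDup_idx.
  2:{ intros e _ He. rewrite (E3_off Lam psi e c) by auto. ring. }
  rewrite !E3_diag, E2_real by auto. ring. Qed.

Lemma omega_entry Lam w phi theta psi a : In a (idx Lam) ->
  omega_g Lam w phi theta psi a = sumC (idx Lam) (fun c => ex (IZR (snd a) * phi) * RtoC (dd Lam theta a c) * ex (IZR (snd c) * psi) * w c)%C.
Proof. intros Ha. unfold omega_g, mvec. apply sumC_ext. intros c Hc. rewrite piL_entry; auto. Qed.

Definition isC (f : R -> C) (a b : R) (l : C) := is_RInt (V:=C_R_NormedModule) f a b l.

Lemma ICpair (f : R -> C) a b lr li : is_RInt (fun t => Re (f t)) a b lr -> is_RInt (fun t => Im (f t)) a b li -> isC f a b (lr, li).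
Proof. intros. apply (is_RInt_fct_extend_pair (U:=R_NormedModule) (V:=R_NormedModule)); auto. Qed.
Lemma ICre (f : R -> C) a b l : isC f a b l -> is_RInt (fun t => Re (f t)) a b (Re l).
Proof. intros H. apply (is_RInt_fct_extend_fst (U:=R_NormedModule) (V:=R_NormedModule) f a b l H). Qed.
Lemma ICim (f : R -> C) a b l : isC f a b l -> is_RInt (fun t => Im (f t)) a b (Im l).
Proof. intros H. apply (is_RInt_fct_extend_snd (U:=R_NormedModule) (V:=R_NormedModule) f a b l H). Qed.

Lemma ICext (f g : R -> C) a b l : (forall t, f t = g t) -> isC f a b l -> isC g a b l.
Proof. intros H. apply (is_RInt_ext (V:=C_R_NormedModule)). intros; apply H. Qed.
Lemma ICval (f : R -> C) a b l l' : l = l' -> isC f a b l -> isC f a b l'.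
Proof. intros ->; auto. Qed.

Lemma ICscal (f : R -> C) a b (k l : C) : isC f a b l -> isC (fun t => k * f t)%C a b (k * l)%C.
Proof. intros H. assert (Hr := ICre _ _ _ _ H). assert (Hi := ICim _ _ _ _ H).
  replace (k * l)%C with (Re k * Re l - Im k * Im l, Re k * Im l + Im k * Re l).
  2:{ apply injective_projections; [change (Re k * Re l - Im k * Im l = Re (k*l)); rewrite re_mult; ring | change (Re k * Im l + Im k * Re l = Im (k * l)); rewrite im_mult; ring]. }
  apply ICpair.
  - apply (IRext (fun t => Re k * Re (f t) - Im k * Im (f t))). intros t; cbv beta; rewrite re_mult; reflexivity.
    apply IRminus; apply IRscal; auto.
  - apply (IRext (fun t => Re k * Im (f t) + Im k * Re (f t))). intros t; cbv beta; rewrite im_mult; reflexivity.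
    apply IRplus; apply IRscal; auto. Qed.

Lemma ICplus (f g : R -> C) a b (l1 l2 : C) : isC f a b l1 -> isC g a b l2 -> isC (fun t => f t + g t)%C a b (l1 + l2)%C.
Proof. intros H1 H2. replace (l1 + l2)%C with (Re l1 + Re l2, Im l1 + Im l2) by reflexivity.
  apply ICpair.
  - apply (IRext (fun t => Re (f t) + Re (g t))). intros t; cbv beta; rewrite re_plus; reflexivity. apply IRplus; apply ICre; auto.
  - apply (IRext (fun t => Im (f t) + Im (g t))). intros t; cbv beta; rewrite im_plus; reflexivity. apply IRplus; apply ICim; auto. Qed.

Lemma IC0 a b : isC (fun _ => 0%C) a b 0%C.
Proof. apply (ICpair _ a b 0 0); apply IRconst0. Qed.

Lemma ICsum {T : Type} (s : list T) (f : T -> R -> C) (I : T -> C) a b :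
  (forall x, In x s -> isC (f x) a b (I x)) -> isC (fun t => sumC s (fun x => f x t)) a b (sumC s I).
Proof. induction s; simpl; intros H. apply IC0. apply ICplus; auto. Qed.

Lemma IC_RtoC (f : R -> R) a b l : is_RInt f a b l -> isC (fun t => RtoC (f t)) a b (RtoC l).
Proof. intros H. apply ICpair; simpl; auto. apply IRconst0. Qed.

Lemma IRval (f : R -> R) a b (l l' : R) : l = l' -> is_RInt f a b l -> is_RInt f a b l'.
Proof. intros ->; auto. Qed.

Lemma IRconst (k a b : R) : is_RInt (fun _ => k) a b ((b - a) * k).
Proof. pose proof (is_RInt_const (V:=R_NormedModule) a b k) as H. unfold scal in H; simpl in H; unfold mult in H; simpl in H. exact H. Qed.

Lemma sin_k2pi (k : Z) : sin (IZR k * (2 * PI)) = 0.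
Proof. apply sin_eq_0_1. exists (2 * k)%Z. rewrite mult_IZR. ring. Qed.
Lemma cos_k2pi (k : Z) : cos (IZR k * (2 * PI)) = 1.
Proof. replace (IZR k * (2 * PI)) with (2 * (IZR k * PI)) by ring. rewrite cos_2a_sin.
  rewrite sin_eq_0_1. ring. exists k; auto. Qed.

Definition Jk (k : Z) : C := if Z.eqb k 0 then RtoC (2 * PI) else 0%C.

Lemma ICex (k : Z) : isC (fun t => ex (IZR k * t)) 0 (2 * PI) (Jk k).
Proof. unfold Jk. destruct (Z.eqb_spec k 0).
  - subst. apply (ICext (fun _ => RtoC 1)). intros; unfold ex. rewrite Rmult_0_l, cos_0, sin_0. reflexivity.
    replace (RtoC (2 * PI)) with (RtoC ((2 * PI - 0) * 1)) by (f_equal; ring).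
    apply IC_RtoC. apply IRconst.
  - assert (Hk : IZR k <> 0) by (apply not_0_IZR; auto).
    apply (ICpair _ _ _ 0 0); cbv beta; unfold ex, Re, Im; cbn [fst snd].
    + eapply IRval. 2:{ apply (IRftc (fun t => sin (IZR k * t) / IZR k) (fun t => cos (IZR k * t))).
      intros t. auto_derive; auto. field; auto.
      intros t. apply continuous_cos_comp. apply (continuous_scal_r (K:=R_AbsRing) (V:=R_NormedModule) (IZR k) (fun t => t)). apply continuous_id. }
      cbv beta. rewrite sin_k2pi, Rmult_0_r, sin_0; field; auto.
    + eapply IRval. 2:{ apply (IRftc (fun t => - cos (IZR k * t) / IZR k) (fun t => sin (IZR k * t))).
      intros t. auto_derive; auto. field; auto.
      intros t. apply continuous_sin_comp. apply (continuous_scal_r (K:=R_AbsRing) (V:=R_NormedModule) (IZR k) (fun t => t)). apply continuous_id. }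
      cbv beta. rewrite cos_k2pi, Rmult_0_r, cos_0; field; auto. Qed.

Lemma Cconj_sumC {T : Type} (s : list T) (f : T -> C) : Cconj (sumC s f) = sumC s (fun x => Cconj (f x)).
Proof. induction s; simpl. apply injective_projections; simpl; ring. rewrite Cplus_conj, IHs; auto. Qed.
Lemma sumC_mult {T U : Type} (s : list T) (t : list U) (f : T -> C) (g : U -> C) :
  (sumC s f * sumC t g)%C = sumC s (fun x => sumC t (fun y => f x * g y))%C.
Proof. induction s; simpl. ring. rewrite Cmult_plus_distr_r, IHs. f_equal. rewrite <- sumC_scal. reflexivity. Qed.
Lemma ex_conj x y : (ex x * Cconj (ex y))%C = ex (x - y).
Proof. unfold ex. apply injective_projections; simpl; [rewrite cos_minus|rewrite sin_minus]; ring. Qed.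
Lemma conj_RtoC r : Cconj (RtoC r) = RtoC r.
Proof. unfold Cconj, RtoC; simpl. apply injective_projections; simpl; ring. Qed.

Definition Wcd (w : vec) (c d : ix) : C := (w c * Cconj (w d))%C.

Section Int.
Variable Lam : nat.
Variable w : vec.
Variables a b : ix.
Hypothesis Ha : In a (idx Lam).
Hypothesis Hb : In b (idx Lam).

Lemma Pg_formula phi theta psi : Pg Lam w phi theta psi a b =
  sumC (idx Lam) (fun c => sumC (idx Lam) (fun d =>
     (ex (IZR (snd a - snd b) * phi) * Wcd w c d * RtoC (dd Lam theta a c * dd Lam theta b d)) * ex (IZR (snd c - snd d) * psi)))%C.
Proof. unfold Pg. rewrite !omega_entry by auto. rewrite Cconj_sumC, sumC_mult.
  apply sumC_ext; intros c _. apply sumC_ext; intros d _.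
  rewrite !Cmult_conj, conj_RtoC.
  transitivity ((ex (IZR (snd a) * phi) * Cconj (ex (IZR (snd b) * phi))) * Wcd w c d * RtoC (dd Lam theta a c * dd Lam theta b d) *
      (ex (IZR (snd c) * psi) * Cconj (ex (IZR (snd d) * psi))))%C.
  { unfold Wcd. rewrite RtoC_mult. ring. }
  rewrite !ex_conj, !minus_IZR. f_equal; [f_equal; f_equal; f_equal; ring| f_equal; ring]. Qed.

Definition V1 phi theta := sumC (idx Lam) (fun c => sumC (idx Lam) (fun d =>
     (ex (IZR (snd a - snd b) * phi) * Wcd w c d * RtoC (dd Lam theta a c * dd Lam theta b d)) * Jk (snd c - snd d)))%C.

Lemma step1 phi theta : RInt (V:=C_R_CompleteNormedModule) (fun psi => Pg Lam w phi theta psi a b) 0 (2 * PI) = V1 phi theta.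
Proof. apply (is_RInt_unique (V:=C_R_CompleteNormedModule)).
  apply (ICext (fun psi => sumC (idx Lam) (fun c => sumC (idx Lam) (fun d =>
     (ex (IZR (snd a - snd b) * phi) * Wcd w c d * RtoC (dd Lam theta a c * dd Lam theta b d)) * ex (IZR (snd c - snd d) * psi)))%C)).
  intros; rewrite Pg_formula; reflexivity.
  apply (ICsum (idx Lam) (fun c psi => sumC (idx Lam) (fun d => _))). intros c _.
  apply (ICsum (idx Lam) (fun d psi => _)). intros d _.
  apply ICscal. apply ICex. Qed.

Definition V2 phi := sumC (idx Lam) (fun c => sumC (idx Lam) (fun d =>
     (ex (IZR (snd a - snd b) * phi) * Wcd w c d * Jk (snd c - snd d)) * RtoC (S Lam c d a b)))%C.

Lemma step2 phi : RInt (V:=C_R_CompleteNormedModule) (fun theta => RtoC (sin theta) * V1 phi theta)%C 0 PI = V2 phi.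
Proof. apply (is_RInt_unique (V:=C_R_CompleteNormedModule)).
  apply (ICext (fun theta => sumC (idx Lam) (fun c => sumC (idx Lam) (fun d =>
     (ex (IZR (snd a - snd b) * phi) * Wcd w c d * Jk (snd c - snd d)) * RtoC (Sf Lam c d a b theta)))%C)).
  { intros t. unfold V1. rewrite <- sumC_scal. apply sumC_ext; intros c _. rewrite <- sumC_scal. apply sumC_ext; intros d _.
    unfold Sf. rewrite !RtoC_mult. ring. }
  apply (ICsum (idx Lam) (fun c psi => sumC (idx Lam) (fun d => _))). intros c _.
  apply (ICsum (idx Lam) (fun d psi => _)). intros d _.
  apply ICscal. apply IC_RtoC. apply S_is. Qed.

Definition V3 := sumC (idx Lam) (fun c => sumC (idx Lam) (fun d =>
     (Wcd w c d * Jk (snd c - snd d) * RtoC (S Lam c d a b)) * Jk (snd a - snd b)))%C.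

Lemma step3 : RInt (V:=C_R_CompleteNormedModule) V2 0 (2 * PI) = V3.
Proof. apply (is_RInt_unique (V:=C_R_CompleteNormedModule)).
  apply (ICext (fun phi => sumC (idx Lam) (fun c => sumC (idx Lam) (fun d =>
     (Wcd w c d * Jk (snd c - snd d) * RtoC (S Lam c d a b)) * ex (IZR (snd a - snd b) * phi)))%C)).
  { intros t. unfold V2. apply sumC_ext; intros c _. apply sumC_ext; intros d _. ring. }
  apply (ICsum (idx Lam) (fun c psi => sumC (idx Lam) (fun d => _))). intros c _.
  apply (ICsum (idx Lam) (fun d psi => _)). intros d _.
  apply ICscal. apply ICex. Qed.

Lemma so3_val : so3_int (fun phi theta psi => Pg Lam w phi theta psi a b) = V3.
Proof. unfold so3_int. rewrite <- step3. apply (RInt_ext (V:=C_R_CompleteNormedModule)). intros phi _.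
  rewrite <- (step2 phi). apply (RInt_ext (V:=C_R_CompleteNormedModule)). intros theta _. rewrite step1. reflexivity. Qed.

End Int.

Lemma Ccancel (p : R) (x y : C) : p <> 0 -> (RtoC p * x = RtoC p * y)%C -> x = y.
Proof. intros Hp H. assert (H1 := f_equal Re H). assert (H2 := f_equal Im H).
  rewrite !re_scal_l in H1. rewrite !im_scal_l in H2.
  apply injective_projections; eapply Rmult_eq_reg_l; eauto. Qed.

Lemma sqrt_pos_Z (z : Z) : (0 < z)%Z -> sqrt (IZR z) <> 0.
Proof. intros H. apply Rgt_not_eq, sqrt_lt_R0, IZR_lt; auto. Qed.
Lemma sqrt_0_Z (z : Z) : z = 0%Z -> sqrt (IZR z) = 0.
Proof. intros ->. apply sqrt_0. Qed.

Section Tau.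
Variable Lam : nat.
Variable w : vec.

Definition tau (a b : ix) : C := sumC (idx Lam) (fun c => sumC (idx Lam) (fun d =>
   Wcd w c d * Jk (snd c - snd d) * RtoC (S Lam c d a b)))%C.

Lemma V3_tau a b : V3 Lam w a b = (tau a b * Jk (snd a - snd b))%C.
Proof. unfold V3, tau. rewrite Cmult_comm, <- sumC_scal. apply sumC_ext; intros c _.
  rewrite <- sumC_scal. apply sumC_ext; intros d _. ring. Qed.

Lemma R1 a b : In a (idx Lam) -> In b (idx Lam) -> mix a = (mix b + 1)%Z ->
  (RtoC (lpf a) * tau (am a) b = RtoC (lmf b) * tau a (ap b))%C.
Proof. intros Ha Hb Hab. unfold tau. rewrite <- !sumC_scal. apply sumC_ext; intros c Hc.
  rewrite <- !sumC_scal. apply sumC_ext; intros d Hd.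
  destruct (Z.eq_dec (snd c) (snd d)) as [E|E].
  - transitivity (Wcd w c d * Jk (snd c - snd d) * RtoC (lpf a * S Lam c d (am a) b))%C.
    { rewrite RtoC_mult. ring. }
    rewrite (S2 Lam a b c d); auto. rewrite RtoC_mult. ring.
  - unfold Jk. replace (snd c - snd d =? 0)%Z with false by (symmetry; apply Z.eqb_neq; lia). ring. Qed.

Definition T (l l' : nat) (m : Z) : C := tau (l, m) (l', m).

Lemma R1' l l' m : (l <= Lam)%nat -> (l' <= Lam)%nat ->
  (- Z.of_nat l <= m + 1 <= Z.of_nat l)%Z -> (- Z.of_nat l' <= m <= Z.of_nat l')%Z ->
  (RtoC (sqrt (IZR ((Z.of_nat l - m) * (Z.of_nat l + m + 1)))) * T l l' m =
   RtoC (sqrt (IZR ((Z.of_nat l' + m + 1) * (Z.of_nat l' - m)))) * T l l' (m + 1))%C.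
Proof. intros Hl Hl' H1 H2. unfold T.
  assert (E := R1 (l, (m + 1)%Z) (l', m)). unfold am, ap, mix in E; cbn [fst snd] in E.
  replace (m + 1 - 1)%Z with m in E by lia.
  unfold lpf, lmf, lix, mix in E; cbn [fst snd] in E.
  replace ((Z.of_nat l - (m + 1 - 1)) * (Z.of_nat l + (m + 1 - 1) + 1))%Z with ((Z.of_nat l - m) * (Z.of_nat l + m + 1))%Z in E by ring.
  replace ((Z.of_nat l' + (m + 1)) * (Z.of_nat l' - (m + 1) + 1))%Z with ((Z.of_nat l' + m + 1) * (Z.of_nat l' - m))%Z in E by ring.
  apply E; auto; apply In_idx; unfold valid; simpl; lia. Qed.

Lemma T_diag l m : (l <= Lam)%nat -> (- Z.of_nat l <= m <= Z.of_nat l)%Z -> T l l m = T l l (- Z.of_nat l)%Z.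
Proof. intros Hl Hm.
  assert (forall n : nat, (n <= 2 * l)%nat -> T l l (- Z.of_nat l + Z.of_nat n)%Z = T l l (- Z.of_nat l)%Z).
  { induction n; intros Hn. f_equal; lia.
    rewrite <- IHn by lia. symmetry.
    set (m0 := (- Z.of_nat l + Z.of_nat n)%Z).
    replace (- Z.of_nat l + Z.of_nat (Datatypes.S n))%Z with (m0 + 1)%Z by (unfold m0; lia).
    assert (E := R1' l l m0 Hl Hl ltac:(unfold m0; lia) ltac:(unfold m0; lia)).
    replace ((Z.of_nat l + m0 + 1) * (Z.of_nat l - m0))%Z with ((Z.of_nat l - m0) * (Z.of_nat l + m0 + 1))%Z in E by ring.
    eapply Ccancel; [|exact E]. apply sqrt_pos_Z. apply Z.mul_pos_pos; unfold m0; lia. }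
  replace m with (- Z.of_nat l + Z.of_nat (Z.to_nat (m + Z.of_nat l)))%Z by lia. apply H; lia. Qed.

Lemma T_off_gt l l' m : (l <= Lam)%nat -> (l' < l)%nat -> (- Z.of_nat l' <= m <= Z.of_nat l')%Z -> T l l' m = 0%C.
Proof. intros Hl Hl' Hm.
  assert (forall n : nat, (n <= 2 * l')%nat -> T l l' (Z.of_nat l' - Z.of_nat n)%Z = 0%C).
  { induction n; intros Hn.
    - replace (Z.of_nat l' - Z.of_nat 0)%Z with (Z.of_nat l') by lia.
      apply (Ccancel (sqrt (IZR ((Z.of_nat l - Z.of_nat l') * (Z.of_nat l + Z.of_nat l' + 1))))).
      apply sqrt_pos_Z. apply Z.mul_pos_pos; lia.
      rewrite (R1' l l' (Z.of_nat l')); try lia.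
      rewrite sqrt_0_Z by ring. rewrite Cmult_0_r. unfold RtoC. apply injective_projections; simpl; ring.
    - set (m0 := (Z.of_nat l' - Z.of_nat (Datatypes.S n))%Z).
      apply (Ccancel (sqrt (IZR ((Z.of_nat l - m0) * (Z.of_nat l + m0 + 1))))).
      apply sqrt_pos_Z. apply Z.mul_pos_pos; unfold m0; lia.
      rewrite (R1' l l' m0); try (unfold m0; lia).
      replace (m0 + 1)%Z with (Z.of_nat l' - Z.of_nat n)%Z by (unfold m0; lia). rewrite IHn by lia.
      rewrite Cmult_0_r. unfold RtoC. apply injective_projections; simpl; ring. }
  replace m with (Z.of_nat l' - Z.of_nat (Z.to_nat (Z.of_nat l' - m)))%Z by lia. apply H; lia. Qed.

Lemma T_off_lt l l' m : (l' <= Lam)%nat -> (l < l')%nat -> (- Z.of_nat l <= m <= Z.of_nat l)%Z -> T l l' m = 0%C.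
Proof. intros Hl Hl' Hm.
  assert (forall n : nat, (n <= 2 * l)%nat -> T l l' (- Z.of_nat l + Z.of_nat n)%Z = 0%C).
  { induction n; intros Hn.
    - replace (- Z.of_nat l + Z.of_nat 0)%Z with (- Z.of_nat l - 1 + 1)%Z by lia.
      apply (Ccancel (sqrt (IZR ((Z.of_nat l' + (- Z.of_nat l - 1) + 1) * (Z.of_nat l' - (- Z.of_nat l - 1)))))).
      apply sqrt_pos_Z. apply Z.mul_pos_pos; lia.
      rewrite <- (R1' l l' (- Z.of_nat l - 1)); try lia.
      rewrite sqrt_0_Z by ring. rewrite Cmult_0_l. unfold RtoC. apply injective_projections; simpl; ring.
    - set (m0 := (- Z.of_nat l + Z.of_nat n)%Z).
      replace (- Z.of_nat l + Z.of_nat (Datatypes.S n))%Z with (m0 + 1)%Z by (unfold m0; lia).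
      apply (Ccancel (sqrt (IZR ((Z.of_nat l' + m0 + 1) * (Z.of_nat l' - m0))))).
      apply sqrt_pos_Z. apply Z.mul_pos_pos; unfold m0; lia.
      rewrite <- (R1' l l' m0); try (unfold m0; lia).
      unfold m0. rewrite IHn by lia.
      rewrite Cmult_0_r. unfold RtoC. apply injective_projections; simpl; ring. }
  replace m with (- Z.of_nat l + Z.of_nat (Z.to_nat (m + Z.of_nat l)))%Z by lia. apply H; lia. Qed.

End Tau.

Lemma sumC_const {T : Type} (s : list T) (x : C) : sumC s (fun _ => x) = (RtoC (INR (length s)) * x)%C.
Proof. induction s; simpl length; simpl sumC. unfold RtoC; simpl. apply injective_projections; simpl; ring.
  rewrite IHs. rewrite S_INR. rewrite RtoC_plus. ring. Qed.

Lemma length_mrange l : length (mrange l) = (2 * l + 1)%nat.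
Proof. unfold mrange. rewrite length_map, length_seq. reflexivity. Qed.

Section Final1.
Variable Lam : nat.
Variable w : vec.

Lemma trace_tau l : (l <= Lam)%nat ->
  sumC (mrange l) (fun m => tau Lam w (l, m) (l, m)) = RtoC (4 * PI * sumR (mrange l) (fun h => Cmod (w (l, h)) ^ 2)).
Proof. intros Hl. unfold tau. rewrite sumC_swap.
  rewrite (sumC_ext _ _ (fun c => sumC (idx Lam) (fun d => Wcd w c d * Jk (snd c - snd d) * RtoC (sumR (mrange l) (fun m => S Lam c d (l, m) (l, m)))))%C).
  2:{ intros c _. rewrite sumC_swap. apply sumC_ext. intros d _. rewrite <- sumC_RtoC, <- sumC_scal. reflexivity. }
  rewrite (sumC_ext _ _ (fun c => RtoC (Cmod (w c) ^ 2 * (2 * PI) * (2 * (if Nat.eqb l (fst c) then 1 else 0))))).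
  2:{ intros c Hc. rewrite (sumC_single _ _ c); auto. 2: apply NoDup_idx.
      - rewrite S_trace by auto. rewrite ix_eqb_refl. unfold Wcd, Jk. rewrite Z.sub_diag. simpl Z.eqb. cbv iota.
        rewrite <- Cmod2_conj. rewrite !RtoC_mult. ring.
      - intros d _ Hd. rewrite S_trace by auto. rewrite ix_eqb_neq by auto.
        replace (if Nat.eqb l (fst c) then 0 else 0) with 0 by (destruct (Nat.eqb l (fst c)); auto).
        rewrite Rmult_0_r. unfold RtoC. apply injective_projections; simpl; ring. }
  rewrite sumC_RtoC. f_equal. rewrite sumR_idx.
  rewrite (sumR_single _ _ l). 2: apply seq_NoDup. 2: apply in_seq; lia.
  - rewrite <- sumR_scal. apply sumR_ext. intros h _. simpl. rewrite Nat.eqb_refl. ring.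
  - intros l' _ Hl'. apply sumR_0. intros h _. simpl. destruct (Nat.eqb_spec l l'); [congruence|]. ring. Qed.

Lemma part1 : (forall l : nat, (l <= Lam)%nat ->
     sumR (mrange l) (fun h => Cmod (w (l, h)) ^ 2) = (2 * INR l + 1) / (INR Lam + 1) ^ 2) ->
  forall a b : ix, In a (idx Lam) -> In b (idx Lam) ->
     idm a b = (RtoC ((INR Lam + 1) ^ 2 / (8 * PI ^ 2)) * so3_int (fun phi theta psi => Pg Lam w phi theta psi a b))%C.
Proof. intros Hw a b Ha Hb. rewrite so3_val by auto. rewrite V3_tau.
  assert (HPI : PI <> 0) by (apply Rgt_not_eq, PI_RGT_0).
  assert (HL : INR Lam + 1 <> 0) by (pose proof (pos_INR Lam); lra).
  destruct a as [l m], b as [l' m']. pose proof Ha as Ha'. pose proof Hb as Hb'.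
  apply In_idx in Ha', Hb'. unfold valid in Ha', Hb'. cbn [fst snd] in Ha', Hb'.
  unfold Jk. cbn [snd]. destruct (Z.eqb_spec (m - m') 0) as [E|E].
  - assert (m' = m) by lia. subst m'.
    change (tau Lam w (l, m) (l', m)) with (T Lam w l l' m).
    destruct (Nat.lt_total l l') as [Hlt|[Heq|Hgt]].
    + rewrite T_off_lt by lia. unfold idm. rewrite ix_eqb_neq by (intro H; inversion H; lia).
      apply injective_projections; simpl; ring.
    + subst l'. unfold idm. rewrite ix_eqb_refl.
      rewrite T_diag by lia.
      assert (Htr := trace_tau l ltac:(lia)). rewrite Hw in Htr by lia.
      rewrite (sumC_ext _ _ (fun _ => T Lam w l l (- Z.of_nat l)%Z)) in Htr.
      2:{ intros m0 Hm0. apply In_mrange in Hm0. unfold T. apply T_diag; lia. }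
      rewrite sumC_const, length_mrange in Htr.
      assert (Hn : INR (2 * l + 1) <> 0) by (rewrite plus_INR, mult_INR; simpl; pose proof (pos_INR l); lra).
      assert (HT : T Lam w l l (- Z.of_nat l)%Z = RtoC (4 * PI / (INR Lam + 1) ^ 2)).
      { apply (Ccancel (INR (2 * l + 1))); auto. rewrite Htr. rewrite <- RtoC_mult. f_equal.
        rewrite plus_INR, mult_INR. simpl. field. auto. }
      rewrite HT. rewrite <- !RtoC_mult. f_equal. field. auto.
    + rewrite T_off_gt by lia. unfold idm. rewrite ix_eqb_neq by (intro H; inversion H; lia).
      apply injective_projections; simpl; ring.
  - unfold idm. rewrite ix_eqb_neq by (intro H; inversion H; lia).
    apply injective_projections; simpl; ring. Qed.

End Final1.

Definition Uix (a : ix) : ix := (fst a, (- snd a)%Z).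

Lemma U_in Lam a : In a (idx Lam) -> In (Uix a) (idx Lam).
Proof. rewrite !In_idx. unfold valid, Uix; simpl. lia. Qed.
Lemma UU a : Uix (Uix a) = a.
Proof. destruct a; unfold Uix; simpl; f_equal; lia. Qed.
Lemma U_inj a b : Uix a = Uix b -> a = b.
Proof. intros H. rewrite <- (UU a), <- (UU b), H. reflexivity. Qed.

Lemma sumC_map {T U : Type} (g : T -> U) (s : list T) (f : U -> C) : sumC (map g s) f = sumC s (fun x => f (g x)).
Proof. induction s; simpl; auto. rewrite IHs; auto. Qed.

Lemma sumC_U Lam (f : ix -> C) : sumC (idx Lam) (fun c => f (Uix c)) = sumC (idx Lam) f.
Proof. rewrite <- sumC_map. apply sumC_perm. apply NoDup_Permutation.
  - apply FinFun.Injective_map_NoDup. intros x y; apply U_inj. apply NoDup_idx.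
  - apply NoDup_idx.
  - intros x. rewrite in_map_iff. split.
    + intros [y [<- Hy]]. apply U_in; auto.
    + intros Hx. exists (Uix x). split. apply UU. apply U_in; auto. Qed.

Definition sg (m : Z) : R := cos (IZR m * PI).
Lemma sg_m1 m : sg (m - 1) = - sg m.
Proof. unfold sg. rewrite minus_IZR. replace ((IZR m - 1) * PI) with (IZR m * PI - PI) by ring.
  rewrite cos_minus, cos_PI, sin_PI. ring. Qed.
Lemma sg_p1 m : sg (m + 1) = - sg m.
Proof. unfold sg. rewrite plus_IZR. replace ((IZR m + 1) * PI) with (IZR m * PI + PI) by ring.
  apply neg_cos. Qed.
Lemma sin_kpi m : sin (IZR m * PI) = 0.
Proof. apply sin_eq_0_1. exists m; auto. Qed.
Lemma sg_sq m : sg m * sg m = 1.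
Proof. unfold sg. pose proof (sin2_cos2 (IZR m * PI)). rewrite sin_kpi in H. unfold Rsqr in H. lra. Qed.

Section Sym.
Variable Lam : nat.
Notation d := (dd Lam).

Lemma am_U a : am (Uix a) = Uix (ap a).
Proof. unfold am, ap, Uix; simpl. f_equal. lia. Qed.
Lemma ap_U a : ap (Uix a) = Uix (am a).
Proof. unfold am, ap, Uix; simpl. f_equal. lia. Qed.
Lemma lpf_U a : lpf (Uix a) = lmf a.
Proof. unfold lpf, lmf, Uix, lix, mix; simpl. f_equal. f_equal. ring. Qed.
Lemma lmf_U a : lmf (Uix a) = lpf a.
Proof. unfold lpf, lmf, Uix, lix, mix; simpl. f_equal. f_equal. ring. Qed.

Definition Ksym (c : ix) (t : R) (a : ix) : R := sg (snd a) * d t (Uix a) (Uix c) - sg (snd c) * d t a c.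

Lemma Ksym_deriv c t a : In a (idx Lam) ->
  is_derive (fun t => Ksym c t a) t (sumR (idx Lam) (fun e => Xr a e * Ksym c t e)).
Proof. intros Ha. unfold Ksym.
  eapply DRext. 2:{ apply DRminus; (apply DRmult; [apply DRconst| apply dd_deriv_s]). apply U_in; auto. auto. }
  rewrite (Xr_sum Lam a (fun e => sg (snd e) * d t (Uix e) (Uix c) - sg (snd c) * d t e c)) by auto.
  cbv beta. rewrite am_U, ap_U, lpf_U, lmf_U.
  replace (snd (am a)) with (snd a - 1)%Z by reflexivity. replace (snd (ap a)) with (snd a + 1)%Z by reflexivity.
  rewrite sg_m1, sg_p1. field. Qed.

Lemma d_sym t a c : In a (idx Lam) -> In c (idx Lam) -> d t (Uix a) (Uix c) = sg (snd a) * sg (snd c) * d t a c.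
Proof. intros Ha Hc. assert (H := ode_unique Lam (Ksym c) (fun t a Ha => Ksym_deriv c t a Ha)).
  assert (Ksym c t a = 0).
  { apply H; auto. intros x Hx. unfold Ksym. rewrite !dd_0.
    destruct (ix_eq_dec x c) as [->|Hne]. rewrite !ix_eqb_refl. ring.
    rewrite !ix_eqb_neq; auto. ring. intro E; apply Hne; apply U_inj; auto. }
  unfold Ksym in H0. pose proof (sg_sq (snd a)).
  transitivity (sg (snd a) * sg (snd a) * d t (Uix a) (Uix c)). rewrite H1; ring.
  rewrite Rmult_assoc. replace (sg (snd a) * d t (Uix a) (Uix c)) with (sg (snd c) * d t a c) by lra. ring. Qed.

End Sym.

Lemma ex_U (m : Z) (x : R) : (ex (IZR (- m) * x) * RtoC (sg m))%C = ex (IZR m * (PI - x)).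
Proof. unfold ex, sg. rewrite opp_IZR. apply injective_projections; simpl.
  - replace (IZR m * (PI - x)) with (IZR m * PI - IZR m * x) by ring. rewrite cos_minus, sin_kpi.
    replace (- IZR m * x) with (- (IZR m * x)) by ring. rewrite cos_neg. ring.
  - replace (IZR m * (PI - x)) with (IZR m * PI - IZR m * x) by ring. rewrite sin_minus, sin_kpi.
    replace (- IZR m * x) with (- (IZR m * x)) by ring. rewrite sin_neg. ring. Qed.

Lemma ex_per (m : Z) (x : R) : ex (IZR m * (x + 2 * PI)) = ex (IZR m * x).
Proof. unfold ex. replace (IZR m * (x + 2 * PI)) with (IZR m * x + IZR m * (2 * PI)) by ring.
  rewrite cos_plus, sin_plus, cos_k2pi, sin_k2pi. apply injective_projections; simpl; ring. Qed.

Definition refl (x : R) : R := if Rle_dec x PI then PI - x else 3 * PI - x.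
Lemma refl_range x : 0 <= x < 2 * PI -> 0 <= refl x < 2 * PI.
Proof. intros H. pose proof PI_RGT_0. unfold refl. destruct (Rle_dec x PI); lra. Qed.
Lemma ex_refl (m : Z) x : ex (IZR m * refl x) = ex (IZR m * (PI - x)).
Proof. unfold refl. destruct (Rle_dec x PI); auto. replace (3 * PI - x) with ((PI - x) + 2 * PI) by ring. apply ex_per. Qed.

Lemma part2 Lam (w : vec) : (forall a : ix, In a (idx Lam) -> w a = w (fst a, (- snd a)%Z)) ->
   forall phi theta psi : R, euler_range phi theta psi ->
   exists phi' theta' psi' : R, euler_range phi' theta' psi' /\
     forall a : ix, In a (idx Lam) ->
       Uop (omega_g Lam w phi theta psi) a = omega_g Lam w phi' theta' psi' a.
Proof. intros Hw phi theta psi [H1 [H2 H3]]. exists (refl phi), theta, (refl psi).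
  split. split; [apply refl_range; auto|split; auto; apply refl_range; auto].
  intros a Ha. unfold Uop. change (fst a, (- snd a)%Z) with (Uix a).
  rewrite !omega_entry by (auto; apply U_in; auto).
  rewrite <- (sumC_U Lam). apply sumC_ext. intros c Hc.
  rewrite d_sym by auto. change (w (Uix c)) with (w (fst c, (- snd c)%Z)). rewrite <- (Hw c Hc).
  unfold Uix; cbn [fst snd]. rewrite !ex_refl, <- !ex_U.
  rewrite !RtoC_mult. ring. Qed.


Theorem theorem3 (Lam : nat) (w : vec) :
  (forall l : nat, (l <= Lam)%nat ->
     sumR (mrange l) (fun h => Cmod (w (l, h)) ^ 2)
     = (2 * INR l + 1) / (INR Lam + 1) ^ 2) ->
  (forall a b : ix, In a (idx Lam) -> In b (idx Lam) ->
     idm a b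
     = (RtoC ((INR Lam + 1) ^ 2 / (8 * PI ^ 2))
        * so3_int (fun phi theta psi => Pg Lam w phi theta psi a b))%C)
  /\
  ((forall a : ix, In a (idx Lam) -> w a = w (fst a, (- snd a)%Z)) ->
   forall phi theta psi : R, euler_range phi theta psi ->
   exists phi' theta' psi' : R, euler_range phi' theta' psi' /\
     forall a : ix, In a (idx Lam) ->
       Uop (omega_g Lam w phi theta psi) a = omega_g Lam w phi' theta' psi' a).
Proof.
  intros Hw. split.
  - apply part1; auto.
  - apply part2.
Qed.
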